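(* Let $X$ be a complex Banach space and let $a,b\in\mathcal{L}(X)$ both have g-Drazin inverses. If $aba=0$, $bab=0$, $a^2b^2=0$ and $ab^3=0$, then $a+b$ has a g-Drazin inverse.
   Context: $\mathcal{L}(X)$ denotes the Banach algebra of bounded linear operators on the complex Banach space $X$. An element $a$ of a unital Banach algebra $\mathcal{A}$ is quasinilpotent if $\lim_{n\to\infty}\|a^n\|^{1/n}=0$. An element $a\in\mathcal{A}$ has a g-Drazin (generalized Drazin) inverse if there exists $x\in\mathcal{A}$ with $x=xax$, $ax=xa$, and $a-a^2x$ quasinilpotent; such $x$ is unique and is denoted $a^d$. *)

(* Defs.v *)
From Stdlib Require Import Reals.
Open Scope R_scope.

Record Cpx := mkC { Cre : R; Cim : R }.
Definition C0 : Cpx := mkC 0 0.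
Definition C1 : Cpx := mkC 1 0.
Definition Cadd (z w : Cpx) : Cpx := mkC (Cre z + Cre w) (Cim z + Cim w).
Definition Cmul (z w : Cpx) : Cpx :=
  mkC (Cre z * Cre w - Cim z * Cim w) (Cre z * Cim w + Cim z * Cre w).
Definition Cmod (z : Cpx) : R := sqrt (Cre z ^ 2 + Cim z ^ 2).

Record CBanach := {
  vec :> Type;
  vzero : vec;
  vadd : vec -> vec -> vec;
  vopp : vec -> vec;
  vscal : Cpx -> vec -> vec;
  vnorm : vec -> R;
  vadd_assoc : forall x y z, vadd x (vadd y z) = vadd (vadd x y) z;
  vadd_comm : forall x y, vadd x y = vadd y x;
  vadd_0 : forall x, vadd x vzero = x;
  vadd_opp : forall x, vadd x (vopp x) = vzero;
  vscal_1 : forall x, vscal C1 x = x;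
  vscal_mul : forall c d x, vscal c (vscal d x) = vscal (Cmul c d) x;
  vscal_addv : forall c x y, vscal c (vadd x y) = vadd (vscal c x) (vscal c y);
  vscal_adds : forall c d x, vscal (Cadd c d) x = vadd (vscal c x) (vscal d x);
  vnorm_nonneg : forall x, 0 <= vnorm x;
  vnorm_eq0 : forall x, vnorm x = 0 -> x = vzero;
  vnorm_triangle : forall x y, vnorm (vadd x y) <= vnorm x + vnorm y;
  vnorm_scal : forall c x, vnorm (vscal c x) = Cmod c * vnorm x;
  vcomplete : forall u : nat -> vec,
    (forall eps, 0 < eps -> exists N, forall m n, (m >= N)%nat -> (n >= N)%nat ->
        vnorm (vadd (u m) (vopp (u n))) < eps) ->
    exists l, forall eps, 0 < eps -> exists N, forall n, (n >= N)%nat ->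
        vnorm (vadd (u n) (vopp l)) < eps
}.

Arguments vzero {_}. Arguments vadd {_}. Arguments vopp {_}.
Arguments vscal {_}. Arguments vnorm {_}.

Section Ops.
Variable X : CBanach.

Definition bounded_linear (T : X -> X) : Prop :=
  (forall x y, T (vadd x y) = vadd (T x) (T y)) /\
  (forall c x, T (vscal c x) = vscal c (T x)) /\
  (exists M, forall x, vnorm (T x) <= M * vnorm x).

Definition opmul (S T : X -> X) : X -> X := fun x => S (T x).
Definition opadd (S T : X -> X) : X -> X := fun x => vadd (S x) (T x).
Definition opsub (S T : X -> X) : X -> X := fun x => vadd (S x) (vopp (T x)).
Fixpoint oppow (T : X -> X) (n : nat) : X -> X :=
  match n with O => fun x => x | S k => opmul T (oppow T k) end.

Definition is_opnorm (T : X -> X) (m : R) : Prop :=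
  is_lub (fun r => exists x, vnorm x <= 1 /\ r = vnorm (T x)) m.

(** n-th root of a nonnegative real (with root of 0 equal to 0). *)
Definition nroot (n : nat) (r : R) : R :=
  if Rlt_dec 0 r then Rpower r (/ INR n) else 0.

Definition quasinilpotent (T : X -> X) : Prop :=
  exists u : nat -> R, (forall n, is_opnorm (oppow T n) (u n)) /\
    Un_cv (fun n => nroot n (u n)) 0.

Definition has_gDrazin (T : X -> X) : Prop :=
  exists S, bounded_linear S /\
    opmul S (opmul T S) = S /\
    opmul T S = opmul S T /\
    quasinilpotent (opsub T (opmul (opmul T T) S)).

End Ops.

(* Main.v *)
Require Import Defs.
From Stdlib Require Import Reals Lra Lia List FunctionalExtensionality IndefiniteDescription.
Open Scope R_scope.

Arguments vadd_assoc {_}. Arguments vadd_comm {_}. Arguments vadd_0 {_}.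
Arguments vadd_opp {_}. Arguments vscal_1 {_}. Arguments vscal_mul {_}.
Arguments vscal_addv {_}. Arguments vscal_adds {_}. Arguments vnorm_nonneg {_}.
Arguments vnorm_eq0 {_}. Arguments vnorm_triangle {_}. Arguments vnorm_scal {_}.
Arguments vcomplete {_}.

Section Vec.
Variable X : CBanach.

Lemma vadd_0l (x : X) : vadd vzero x = x.
Proof. rewrite vadd_comm; apply vadd_0. Qed.
Lemma vadd_oppl (x : X) : vadd (vopp x) x = vzero.
Proof. rewrite vadd_comm; apply vadd_opp. Qed.
Lemma vadd_cancel_l (a x y : X) : vadd a x = vadd a y -> x = y.
Proof.
  intro H. rewrite <- (vadd_0l x), <- (vadd_0l y), <- (vadd_oppl a).
  rewrite <- !vadd_assoc, H; reflexivity.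
Qed.
Lemma vopp_unique (x y : X) : vadd x y = vzero -> y = vopp x.
Proof. intro H. apply (vadd_cancel_l x). rewrite H, vadd_opp; reflexivity. Qed.
Lemma vopp_vopp (x : X) : vopp (vopp x) = x.
Proof. symmetry; apply vopp_unique, vadd_oppl. Qed.
Lemma vopp_zero : vopp (@vzero X) = vzero.
Proof. symmetry; apply vopp_unique, vadd_0. Qed.
Lemma vopp_vadd (x y : X) : vopp (vadd x y) = vadd (vopp x) (vopp y).
Proof.
  symmetry; apply vopp_unique.
  rewrite (vadd_comm (vopp x)), vadd_assoc, <- (vadd_assoc x y), vadd_opp, vadd_0, vadd_opp.
  reflexivity.
Qed.

Lemma vscal_C0 (x : X) : vscal Defs.C0 x = vzero.
Proof.
  assert (E : Cadd Defs.C0 Defs.C0 = Defs.C0) by (unfold Cadd, Defs.C0; simpl; f_equal; ring).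
  assert (H := vscal_adds Defs.C0 Defs.C0 x). rewrite E in H.
  apply (vadd_cancel_l (vscal Defs.C0 x)). rewrite <- H, vadd_0. reflexivity.
Qed.

Lemma Cmod_real (r : R) : Cmod (mkC r 0) = Rabs r.
Proof. unfold Cmod; cbn [Cre Cim]. replace (r^2 + 0^2) with (Rsqr r) by (unfold Rsqr; ring).
  apply sqrt_Rsqr_abs. Qed.

Lemma vnorm_zero : vnorm (@vzero X) = 0.
Proof.
  rewrite <- (vscal_C0 vzero), vnorm_scal. unfold Defs.C0. rewrite Cmod_real, Rabs_R0. ring.
Qed.

Lemma vopp_scal (x : X) : vopp x = vscal (mkC (-1) 0) x.
Proof.
  symmetry; apply vopp_unique.
  rewrite <- (vscal_1 x) at 1. rewrite <- vscal_adds.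
  replace (Cadd Defs.C1 (mkC (-1) 0)) with Defs.C0 by (unfold Cadd, Defs.C0, Defs.C1; simpl; f_equal; ring).
  apply vscal_C0.
Qed.

Lemma vnorm_opp (x : X) : vnorm (vopp x) = vnorm x.
Proof. rewrite vopp_scal, vnorm_scal, Cmod_real. rewrite Rabs_left by lra; ring. Qed.

Definition rs (r : R) (x : X) : X := vscal (mkC r 0) x.
Lemma vnorm_rs r (x : X) : vnorm (rs r x) = Rabs r * vnorm x.
Proof. unfold rs; rewrite vnorm_scal, Cmod_real; reflexivity. Qed.

Lemma vnorm_sub_tri (x y z : X) :
  vnorm (vadd x (vopp z)) <= vnorm (vadd x (vopp y)) + vnorm (vadd y (vopp z)).
Proof.
  replace (vadd x (vopp z)) with (vadd (vadd x (vopp y)) (vadd y (vopp z))).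
  apply vnorm_triangle.
  rewrite <- vadd_assoc, (vadd_assoc (vopp y)), vadd_oppl, vadd_0l; reflexivity.
Qed.

Lemma vnorm_sub_sym (x y : X) : vnorm (vadd x (vopp y)) = vnorm (vadd y (vopp x)).
Proof.
  rewrite <- vnorm_opp, vopp_vadd, vopp_vopp, vadd_comm; reflexivity.
Qed.

Lemma vnorm_eq0_iff_le (x : X) : (forall e, 0 < e -> vnorm x <= e) -> x = vzero.
Proof.
  intro H. apply vnorm_eq0. assert (h := vnorm_nonneg x).
  destruct h as [h|h]; [|auto]. specialize (H (vnorm x / 2)). lra.
Qed.

Fixpoint zsn (n : nat) (v : X) : X := match n with O => vzero | S k => vadd v (zsn k v) end.
Lemma zsn_add n m v : zsn (n + m) v = vadd (zsn n v) (zsn m v).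
Proof. induction n; simpl. rewrite vadd_0l; auto. rewrite IHn, vadd_assoc; auto. Qed.

Definition term (pn : nat * nat) (v : X) : X := vadd (zsn (fst pn) v) (vopp (zsn (snd pn) v)).

Lemma swap4 (a b c d : X) : vadd (vadd a b) (vadd c d) = vadd (vadd a c) (vadd b d).
Proof.
  rewrite !vadd_assoc. f_equal. rewrite <- !vadd_assoc. f_equal. apply vadd_comm.
Qed.

Lemma term_add p q v : term (fst p + fst q, snd p + snd q)%nat v = vadd (term p v) (term q v).
Proof. unfold term; simpl. rewrite !zsn_add, vopp_vadd. apply swap4. Qed.

Lemma term_swap p v : term (snd p, fst p) v = vopp (term p v).
Proof. unfold term; simpl. rewrite vopp_vadd, vopp_vopp, vadd_comm; reflexivity. Qed.

Inductive vexp := VA (n : nat) | VZ | VP (a b : vexp) | VN (a : vexp).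
Fixpoint veval (env : list X) (e : vexp) : X :=
  match e with
  | VA n => nth n env vzero | VZ => vzero
  | VP a b => vadd (veval env a) (veval env b) | VN a => vopp (veval env a)
  end.

Fixpoint eval_nf (env : list X) (cs : list (nat*nat)) : X :=
  match cs with
  | nil => vzero
  | c :: cs' => vadd (term c (hd vzero env)) (eval_nf (tl env) cs')
  end.

Fixpoint ladd (l m : list (nat*nat)) : list (nat*nat) :=
  match l, m with
  | nil, _ => m | _, nil => l
  | x :: l', y :: m' => (fst x + fst y, snd x + snd y)%nat :: ladd l' m'
  end.
Definition swp (p : nat*nat) : nat*nat := (snd p, fst p).
Fixpoint nf (e : vexp) : list (nat*nat) :=
  match e with
  | VA k => repeat (0,0)%nat k ++ ((1,0)%nat :: nil)
  | VZ => nil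
  | VP a b => ladd (nf a) (nf b)
  | VN a => map swp (nf a)
  end.

Lemma eval_ladd env l m : eval_nf env (ladd l m) = vadd (eval_nf env l) (eval_nf env m).
Proof.
  revert env m; induction l as [|x l IH]; intros env m; simpl.
  - rewrite vadd_0l; auto.
  - destruct m as [|y m]; simpl. rewrite vadd_0; auto.
    rewrite IH, term_add. apply swap4.
Qed.

Lemma eval_swp env l : eval_nf env (map swp l) = vopp (eval_nf env l).
Proof.
  revert env; induction l as [|x l IH]; intros env; simpl.
  - rewrite vopp_zero; auto.
  - rewrite IH, vopp_vadd. f_equal. apply term_swap.
Qed.

Lemma term00 v : term (0,0)%nat v = vzero.
Proof. unfold term; simpl. rewrite vopp_zero, vadd_0; auto. Qed.

Lemma eval_VA env k : eval_nf env (repeat (0,0)%nat k ++ ((1,0)%nat :: nil)) = nth k env vzero.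
Proof.
  revert env; induction k; intros env; simpl.
  - unfold term; simpl. rewrite vopp_zero, !vadd_0. destruct env; reflexivity.
  - rewrite term00, vadd_0l, IHk. destruct env; simpl; auto. destruct k; reflexivity.
Qed.

Lemma nf_sound env e : veval env e = eval_nf env (nf e).
Proof.
  induction e; simpl.
  - rewrite eval_VA; auto.
  - auto.
  - rewrite eval_ladd, IHe1, IHe2; auto.
  - rewrite eval_swp, IHe; auto.
Qed.

Lemma term_canon a b v : term (a,b) v = term (a - b, b - a)%nat v.
Proof.
  revert a; induction b; intros a.
  - destruct a; simpl; rewrite ?Nat.sub_0_r; reflexivity.
  - destruct a.
    + simpl. reflexivity.
    + simpl. rewrite <- IHb. unfold term; simpl.
      rewrite vopp_vadd, swap4, vadd_opp, vadd_0l. reflexivity.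
Qed.

Lemma term_eq p q v : (fst p + snd q = fst q + snd p)%nat -> term p v = term q v.
Proof.
  destruct p as [a b], q as [c d]; simpl; intro H.
  rewrite term_canon, (term_canon c d).
  replace (a - b)%nat with (c - d)%nat by lia.
  replace (b - a)%nat with (d - c)%nat by lia. reflexivity.
Qed.

Fixpoint allz (l : list (nat*nat)) : bool :=
  match l with nil => true | x :: l' => Nat.eqb (fst x) (snd x) && allz l' end.
Fixpoint leq (l m : list (nat*nat)) : bool :=
  match l, m with
  | nil, _ => allz m
  | x :: l', nil => allz l
  | x :: l', y :: m' => Nat.eqb (fst x + snd y) (fst y + snd x) && leq l' m'
  end.

Lemma allz_sound env l : allz l = true -> eval_nf env l = vzero.
Proof.
  revert env; induction l as [|x l IH]; intros env H; simpl in *; auto.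
  apply andb_prop in H as [H1 H2]. apply Nat.eqb_eq in H1.
  rewrite IH by auto. rewrite (term_eq x (0,0)%nat) by (simpl; lia). rewrite term00, vadd_0; auto.
Qed.

Lemma leq_sound env l m : leq l m = true -> eval_nf env l = eval_nf env m.
Proof.
  revert env m; induction l as [|x l IH]; intros env m H.
  - simpl in H. symmetry. apply allz_sound; auto.
  - destruct m as [|y m]; simpl in H |- *.
    + apply andb_prop in H as [H1 H2]. apply Nat.eqb_eq in H1.
      rewrite (allz_sound _ l) by auto. rewrite (term_eq x (0,0)%nat) by (simpl; lia). rewrite term00, vadd_0; auto.
    + apply andb_prop in H as [H1 H2]. apply Nat.eqb_eq in H1.
      rewrite (IH _ m H2), (term_eq x y) by lia. reflexivity.
Qed.

Lemma veval_eq env e1 e2 : leq (nf e1) (nf e2) = true -> veval env e1 = veval env e2.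
Proof. intro H; rewrite !nf_sound; apply leq_sound; auto. Qed.
End Vec.

Ltac vlookup x l :=
  match l with
  | (x :: _) => constr:(O)
  | (_ :: ?l') => let n := vlookup x l' in constr:(S n)
  end.
Ltac vcollect t l :=
  match t with
  | vadd ?a ?b => let l1 := vcollect a l in vcollect b l1
  | vopp ?a => vcollect a l
  | vzero => l
  | _ => match constr:(tt) with
         | _ => let n := vlookup t l in l
         | _ => constr:(app l (cons t nil))
         end
  end.
Ltac vreify t l :=
  match t with
  | vadd ?a ?b => let ea := vreify a l in let eb := vreify b l in constr:(VP ea eb)
  | vopp ?a => let ea := vreify a l in constr:(VN ea)
  | vzero => constr:(VZ)
  | _ => let n := vlookup t l in constr:(VA n)
  end.
Ltac vgroup :=
  match goal with
  | |- @eq (vec ?X) ?u ?v =>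
    let l0 := constr:(@nil (vec X)) in
    let l1 := vcollect u l0 in let l2 := vcollect v l1 in
    let l := eval cbv [app] in l2 in
    let eu := vreify u l in let ev := vreify v l in
    change (veval X l eu = veval X l ev); apply veval_eq; vm_compute; reflexivity
  end.


Section Ops2.
Variable X : CBanach.
Definition Iop : X -> X := fun x => x.
Definition Zop : X -> X := fun _ => vzero.
Definition BL (T : X -> X) := bounded_linear X T.

Lemma vscal_zero c : vscal c (@vzero X) = vzero.
Proof.
  apply (vadd_cancel_l X (vscal c vzero)). rewrite <- vscal_addv, !vadd_0; auto.
Qed.
Lemma vscal_opp c (v : X) : vscal c (vopp v) = vopp (vscal c v).
Proof. apply vopp_unique. rewrite <- vscal_addv, vadd_opp. apply vscal_zero. Qed.

Lemma bl_add T : BL T -> forall u v, T (vadd u v) = vadd (T u) (T v).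
Proof. intros [H _]; auto. Qed.
Lemma bl_scal T : BL T -> forall c u, T (vscal c u) = vscal c (T u).
Proof. intros [_ [H _]]; auto. Qed.
Lemma bl_zero T : BL T -> T vzero = vzero.
Proof.
  intro H. apply (vadd_cancel_l X (T vzero)). rewrite <- bl_add, !vadd_0; auto.
Qed.
Lemma bl_opp T : BL T -> forall u, T (vopp u) = vopp (T u).
Proof. intros H u. apply vopp_unique. rewrite <- bl_add, vadd_opp by auto. apply bl_zero; auto. Qed.
Lemma bl_bnd T : BL T -> exists M, 0 <= M /\ forall x, vnorm (T x) <= M * vnorm x.
Proof.
  intros [_ [_ [M HM]]]. exists (Rmax M 0). split. apply Rmax_r.
  intro x. eapply Rle_trans. apply HM. apply Rmult_le_compat_r. apply vnorm_nonneg. apply Rmax_l.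
Qed.

Lemma BL_I : BL Iop.
Proof. split; [|split]; unfold Iop; auto. exists 1; intros; lra. Qed.
Lemma BL_Z : BL Zop.
Proof. split; [|split]; unfold Zop; intros. rewrite vadd_0; auto. symmetry; apply vscal_zero.
  exists 0; intros. rewrite vnorm_zero; lra. Qed.
Lemma BL_mul A B : BL A -> BL B -> BL (opmul X A B).
Proof.
  intros HA HB. unfold opmul. split; [|split].
  - intros; rewrite (bl_add B), (bl_add A); auto.
  - intros; rewrite (bl_scal B), (bl_scal A); auto.
  - destruct (bl_bnd A HA) as [M [HM0 HM]], (bl_bnd B HB) as [N [HN0 HN]].
    exists (M * N); intro x. eapply Rle_trans. apply HM.
    rewrite Rmult_assoc. apply Rmult_le_compat_l; auto.
Qed.
Lemma BL_add A B : BL A -> BL B -> BL (opadd X A B).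
Proof.
  intros HA HB. unfold opadd. split; [|split].
  - intros; rewrite (bl_add B), (bl_add A); auto. apply swap4.
  - intros; rewrite (bl_scal B), (bl_scal A), vscal_addv; auto.
  - destruct (bl_bnd A HA) as [M [HM0 HM]], (bl_bnd B HB) as [N [HN0 HN]].
    exists (M + N); intro x. eapply Rle_trans. apply vnorm_triangle.
    specialize (HM x); specialize (HN x); lra.
Qed.
Lemma BL_sub A B : BL A -> BL B -> BL (opsub X A B).
Proof.
  intros HA HB. unfold opsub. split; [|split].
  - intros; rewrite (bl_add B), (bl_add A), vopp_vadd; auto. apply swap4.
  - intros; rewrite (bl_scal B), (bl_scal A), vscal_addv, vscal_opp; auto.
  - destruct (bl_bnd A HA) as [M [HM0 HM]], (bl_bnd B HB) as [N [HN0 HN]].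
    exists (M + N); intro x. eapply Rle_trans. apply vnorm_triangle.
    rewrite vnorm_opp. specialize (HM x); specialize (HN x); lra.
Qed.
Lemma BL_pow T n : BL T -> BL (oppow X T n).
Proof.
  intro H. induction n; simpl. apply BL_I. apply BL_mul; auto.
Qed.

Lemma oppow_add T n m : oppow X T (n + m) = opmul X (oppow X T n) (oppow X T m).
Proof. induction n; simpl. reflexivity. rewrite IHn; reflexivity. Qed.
Lemma oppow_succ_r T n : oppow X T (S n) = opmul X (oppow X T n) T.
Proof. rewrite <- Nat.add_1_r, oppow_add. reflexivity. Qed.
Lemma oppow_mul T n m : oppow X T (n * m) = oppow X (oppow X T n) m.
Proof.
  induction m. rewrite Nat.mul_0_r; reflexivity.
  replace (n * S m)%nat with (n + n * m)%nat by lia. rewrite oppow_add, IHm; reflexivity.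
Qed.
Lemma oppow_comm A T n : opmul X A T = opmul X T A ->
  opmul X A (oppow X T n) = opmul X (oppow X T n) A.
Proof.
  intro H. induction n. reflexivity.
  simpl. change (opmul X A (opmul X T (oppow X T n)) = opmul X (opmul X T (oppow X T n)) A).
  transitivity (opmul X (opmul X A T) (oppow X T n)). reflexivity.
  rewrite H. transitivity (opmul X T (opmul X A (oppow X T n))). reflexivity.
  rewrite IHn; reflexivity.
Qed.
Lemma oppow_commT T n : opmul X T (oppow X T n) = opmul X (oppow X T n) T.
Proof. apply oppow_comm; reflexivity. Qed.

End Ops2.

Ltac lin :=
  repeat match goal with
  | H : BL _ ?T |- context [?T (vadd ?u ?v)] => rewrite (bl_add _ T H u v)
  | H : BL _ ?T |- context [?T (vopp ?u)] => rewrite (bl_opp _ T H u)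
  | H : BL _ ?T |- context [?T vzero] => rewrite (bl_zero _ T H)
  end.
Ltac opext := apply functional_extensionality; intro;
  unfold opmul, opadd, opsub, Iop, Zop.
Section Norms.
Variable X : CBanach.

Lemma opnorm_sig (T : X -> X) : BL X T -> {m | is_opnorm X T m}.
Proof.
  intro H. apply completeness.
  - destruct (bl_bnd X T H) as [M [HM0 HM]]. exists M. intros r [x [Hx ->]].
    eapply Rle_trans. apply HM. rewrite <- (Rmult_1_r M) at 2. apply Rmult_le_compat_l; auto.
  - exists (vnorm (T vzero)). exists vzero. rewrite vnorm_zero. split; auto; lra.
Defined.

Lemma opnorm_nonneg T m : BL X T -> is_opnorm X T m -> 0 <= m.
Proof.
  intros HT [Hub _]. apply Rle_trans with (vnorm (T vzero)). apply vnorm_nonneg.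
  apply Hub. exists vzero. rewrite vnorm_zero; split; auto; lra.
Qed.

Lemma opnorm_le T m : BL X T -> is_opnorm X T m -> forall x, vnorm (T x) <= m * vnorm x.
Proof.
  intros HT Hm x. destruct (vnorm_nonneg x) as [Hx|Hx].
  - set (y := rs X (/ vnorm x) x).
    assert (Hy : vnorm y = 1). { unfold y. rewrite vnorm_rs, Rabs_pos_eq.
      field; lra. left; apply Rinv_0_lt_compat; auto. }
    assert (HTy : vnorm (T y) <= m). { destruct Hm as [Hub _]. apply Hub. exists y; split; auto; lra. }
    unfold y, rs in HTy. rewrite (bl_scal X T HT), vnorm_scal, Cmod_real, Rabs_pos_eq in HTy
      by (left; apply Rinv_0_lt_compat; auto).
    apply Rmult_le_compat_r with (r := vnorm x) in HTy; [|lra].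
    rewrite Rmult_comm, <- Rmult_assoc, Rinv_r, Rmult_1_l in HTy by lra. auto.
  - symmetry in Hx. apply vnorm_eq0 in Hx. subst. rewrite (bl_zero X T HT), vnorm_zero. lra.
Qed.

Lemma opnorm_min T m M : is_opnorm X T m -> 0 <= M -> (forall x, vnorm (T x) <= M * vnorm x) -> m <= M.
Proof.
  intros [_ Hlub] HM0 HM. apply Hlub. intros r [x [Hx ->]].
  eapply Rle_trans. apply HM. rewrite <- (Rmult_1_r M) at 2. apply Rmult_le_compat_l; auto.
Qed.

Definition qn (T : X -> X) := forall eps, 0 < eps -> exists C, 0 < C /\
  forall n x, vnorm (oppow X T n x) <= C * eps ^ n * vnorm x.

Lemma fin_bound (f : nat -> R) N : exists B, forall n, (n < N)%nat -> f n <= B.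
Proof.
  induction N. exists 0; intros; lia.
  destruct IHN as [B HB]. exists (Rmax B (f N)). intros n Hn.
  destruct (Nat.eq_dec n N). subst; apply Rmax_r.
  eapply Rle_trans. apply HB; lia. apply Rmax_l.
Qed.

Lemma Rpower_pos a b : 0 < Rpower a b.
Proof. unfold Rpower; apply exp_pos. Qed.

Lemma qn_of_quasi T : BL X T -> quasinilpotent X T -> qn T.
Proof.
  intros HT [u [Hu Hcv]] eps Heps.
  destruct (Hcv eps Heps) as [N HN].
  set (N' := Nat.max N 1).
  assert (Hbig : forall n, (n >= N')%nat -> u n <= eps ^ n).
  { intros n Hn. specialize (HN n ltac:(lia)). unfold R_dist in HN. rewrite Rminus_0_r in HN.
    destruct (Rle_lt_dec (u n) 0) as [Hle|Hlt]. { left; apply Rle_lt_trans with 0; auto. apply pow_lt; auto. }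
    unfold nroot in HN. destruct (Rlt_dec 0 (u n)) as [_|C]; [|lra].
    assert (Hn0 : 0 < INR n) by (apply lt_0_INR; lia).
    rewrite Rabs_pos_eq in HN by (left; apply Rpower_pos).
    left. rewrite <- (Rpower_pow n eps Heps).
    replace (u n) with (Rpower (Rpower (u n) (/ INR n)) (INR n)).
    apply Rlt_Rpower_l; auto. split; auto. apply Rpower_pos.
    rewrite Rpower_mult, Rinv_l, Rpower_1; lra. }
  destruct (fin_bound (fun n => u n / eps ^ n) N') as [B HB].
  exists (Rmax 1 B). split. apply Rlt_le_trans with 1; [lra|apply Rmax_l].
  intros n x. eapply Rle_trans. apply opnorm_le. apply BL_pow; auto. apply Hu.
  apply Rmult_le_compat_r. apply vnorm_nonneg.
  assert (He : 0 < eps ^ n) by (apply pow_lt; auto).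
  destruct (Compare_dec.le_lt_dec N' n) as [Hn|Hn].
  - eapply Rle_trans. apply Hbig; auto. rewrite <- (Rmult_1_l (eps^n)) at 1.
    apply Rmult_le_compat_r; [lra|apply Rmax_l].
  - specialize (HB n Hn). simpl in HB.
    replace (u n) with (u n / eps ^ n * eps ^ n) by (field; lra).
    apply Rmult_le_compat_r; [lra|]. eapply Rle_trans. apply HB. apply Rmax_r.
Qed.

Lemma quasi_of_qn T : BL X T -> qn T -> quasinilpotent X T.
Proof.
  intros HT Hq.
  exists (fun n => proj1_sig (opnorm_sig (oppow X T n) (BL_pow X T n HT))).
  split. intro n. destruct (opnorm_sig _ _); auto.
  intros eps Heps. destruct (Hq (eps/2) ltac:(lra)) as [C [HC HCb]].
  destruct (archimed (2 * Rabs (ln C))) as [Har _].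
  destruct (INR_unbounded (2 * Rabs (ln C))) as [N0 HN0].
  exists (S N0). intros n Hn. unfold R_dist. rewrite Rminus_0_r.
  destruct (opnorm_sig (oppow X T n) (BL_pow X T n HT)) as [m Hm]; simpl.
  assert (Hm0 := opnorm_nonneg _ _ (BL_pow X T n HT) Hm).
  assert (HmC : m <= C * (eps/2) ^ n).
  { apply opnorm_min with (T := oppow X T n); auto.
    left; apply Rmult_lt_0_compat; auto; apply pow_lt; lra. }
  unfold nroot. destruct (Rlt_dec 0 m) as [Hmp|Hmp]; [|rewrite Rabs_R0; lra].
  rewrite Rabs_pos_eq by (left; apply Rpower_pos).
  assert (Hn0 : 0 < INR n) by (apply lt_0_INR; lia).
  eapply Rle_lt_trans. apply Rle_Rpower_l. left; apply Rinv_0_lt_compat; auto. split; eauto.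
  rewrite <- Rpower_mult_distr by (auto; apply pow_lt; lra).
  rewrite <- Rpower_pow by lra. rewrite Rpower_mult, Rinv_r, Rpower_1 by lra.
  assert (Hc2 : Rpower C (/ INR n) < 2).
  { unfold Rpower. rewrite <- (exp_ln 2) by lra. apply exp_increasing.
    assert (H2 := ln_lt_2). assert (INR n > INR N0) by (apply lt_INR; lia).
    assert (Hl : / INR n * ln C <= / INR n * Rabs (ln C)).
    { apply Rmult_le_compat_l. left; apply Rinv_0_lt_compat; auto. apply Rle_abs. }
    assert (/ INR n * Rabs (ln C) < / 2).
    { apply Rmult_lt_reg_l with (2 * INR n). lra.
      field_simplify; try lra. }
    lra. }
  assert (0 < Rpower C (/ INR n)) by apply Rpower_pos. nra.
Qed.
End Norms.
Section QN.
Variable X : CBanach.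
Notation qn := (qn X).
Notation BL := (BL X).

Lemma div_nonneg a b : 0 <= a -> 0 < b -> 0 <= a / b.
Proof. intros; unfold Rdiv; apply Rmult_le_pos; [lra|left; apply Rinv_0_lt_compat; lra]. Qed.

Lemma pow2_ge k : INR (S k) <= 2 ^ k.
Proof. induction k. simpl; lra. rewrite S_INR. change (2 ^ S k) with (2 * 2 ^ k). assert (1 <= 2 ^ k) by (apply pow_R1_Rle; lra). lra. Qed.

Lemma zero_of_small (t : X -> X) C d : 0 <= d < 1 ->
  (forall n x, vnorm (t x) <= C * d ^ n * vnorm x) -> t = Zop X.
Proof.
  intros Hd H. apply functional_extensionality; intro x. unfold Zop.
  apply vnorm_eq0_iff_le. intros e He.
  destruct (Rle_lt_dec (Rabs C * vnorm x) 0) as [H0|H0].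
  { eapply Rle_trans. apply (H O x). simpl. assert (Hr := Rle_abs C).
    assert (h := vnorm_nonneg x). nra. }
  destruct (pow_lt_1_zero d ltac:(rewrite Rabs_pos_eq; lra) (e / (Rabs C * vnorm x))) as [N HN].
  apply Rdiv_lt_0_compat; auto.
  specialize (HN N (le_n _)). rewrite Rabs_pos_eq in HN by (apply pow_le; lra).
  eapply Rle_trans. apply (H N x).
  assert (Hr := Rle_abs C). assert (h := vnorm_nonneg x). assert (hp : 0 <= d ^ N) by (apply pow_le; lra).
  apply Rmult_lt_compat_r with (r := Rabs C * vnorm x) in HN; auto.
  unfold Rdiv in HN. rewrite Rmult_assoc, Rinv_l, Rmult_1_r in HN by lra.
  assert (0 <= (Rabs C - C) * (d ^ N * vnorm x)) by (apply Rmult_le_pos; [lra|nra]). nra.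
Qed.

Lemma qn_conj Z A W B : BL A -> BL B -> BL W -> qn W ->
  (forall k, oppow X Z (S k) = opmul X A (opmul X (oppow X W k) B)) -> qn Z.
Proof.
  intros HA HB HW Hq Hk eps Heps.
  destruct (bl_bnd X A HA) as [Ma [Ha0 Ha]], (bl_bnd X B HB) as [Mb [Hb0 Hb]].
  destruct (Hq eps Heps) as [C [HC HCb]].
  exists (1 + Ma * C * Mb / eps). split.
  { assert (0 <= Ma * C * Mb / eps). { unfold Rdiv. apply Rmult_le_pos. apply Rmult_le_pos; nra. left; apply Rinv_0_lt_compat; lra. } lra. }
  intros n x. destruct n.
  - simpl. assert (0 <= Ma * C * Mb / eps). { unfold Rdiv. apply Rmult_le_pos. apply Rmult_le_pos; nra. left; apply Rinv_0_lt_compat; lra. }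
    assert (h := vnorm_nonneg x). nra.
  - rewrite Hk. unfold opmul. eapply Rle_trans. apply Ha.
    eapply Rle_trans. apply Rmult_le_compat_l; [auto|apply HCb].
    assert (h := vnorm_nonneg (B x)). assert (h2 := Hb x). assert (hx := vnorm_nonneg x).
    assert (hp : 0 < eps ^ n) by (apply pow_lt; lra).
    simpl. replace (Ma * (C * eps ^ n * vnorm (B x))) with (Ma * C * eps ^ n * vnorm (B x)) by ring.
    apply Rle_trans with (Ma * C * eps ^ n * (Mb * vnorm x)).
    { apply Rmult_le_compat_l; auto. apply Rmult_le_pos; [nra|lra]. }
    assert (E : Ma * C * Mb / eps * (eps * eps ^ n) = Ma * C * eps ^ n * Mb) by (field; lra).
    assert (0 <= eps * eps ^ n * vnorm x) by (apply Rmult_le_pos; nra).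
    rewrite Rmult_plus_distr_r, Rmult_1_l, Rmult_plus_distr_r, E. nra.
Qed.

Lemma qn_Z : qn (Zop X).
Proof.
  intros eps Heps. exists 1. split. lra. intros n x. destruct n.
  - simpl. lra.
  - simpl. unfold opmul, Zop. rewrite vnorm_zero. assert (h := vnorm_nonneg x).
    assert (0 < eps * eps ^ n) by (apply Rmult_lt_0_compat; auto; apply pow_lt; auto). nra.
Qed.

Lemma qn_sq0 T : BL T -> opmul X T T = Zop X -> qn T.
Proof.
  intros HT H. apply (qn_conj T T (Zop X) (Iop X)); auto using BL_I, BL_Z, qn_Z.
  intro k. destruct k. reflexivity.
  apply functional_extensionality; intro x.
  change (opmul X T T (oppow X T k x) = T (oppow X (Zop X) (S k) (Iop X x))).
  rewrite H. unfold Zop. simpl. unfold opmul. rewrite (bl_zero X T HT). reflexivity.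
Qed.

Lemma qn_pos T eps : qn T -> 0 < eps -> exists C, 0 < C /\ forall n x,
  vnorm (oppow X T n x) <= C * eps ^ n * vnorm x.
Proof. intros H He; apply H; auto. Qed.

Lemma qn_add0 g h : BL g -> BL h -> qn g -> qn h -> opmul X g h = Zop X -> qn (opadd X g h).
Proof.
  intros Hg Hh qg qh H0 eps Heps.
  set (e := eps / 2).
  destruct (qg e ltac:(unfold e; lra)) as [Cg [HCg Hbg]].
  destruct (qh e ltac:(unfold e; lra)) as [Ch [HCh Hbh]].
  set (D := Ch * Rmax 1 Cg).
  assert (HD : 0 < D) by (unfold D; apply Rmult_lt_0_compat; auto; apply Rlt_le_trans with 1; [lra|apply Rmax_l]).
  assert (Hga : forall k, opmul X g (oppow X (opadd X g h) k) = oppow X g (S k)).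
  { induction k. reflexivity.
    apply functional_extensionality; intro x.
    set (y := oppow X (opadd X g h) k x).
    change (g (vadd (g y) (h y)) = g (g (oppow X g k x))).
    rewrite (bl_add X g Hg). change (g (h y)) with (opmul X g h y). rewrite H0. unfold Zop. rewrite vadd_0.
    change (g (opmul X g (oppow X (opadd X g h) k) x) = g (oppow X g (S k) x)). rewrite IHk. reflexivity. }
  assert (Cl : forall k m x, vnorm (oppow X h m (oppow X (opadd X g h) k x)) <= INR (S k) * D * e ^ (m + k) * vnorm x).
  { induction k; intros m x.
    - simpl oppow at 2. rewrite Nat.add_0_r. eapply Rle_trans. apply Hbh.
      assert (h1 := Rmax_l 1 Cg). assert (hx := vnorm_nonneg x).
      assert (hp : 0 < e ^ m) by (apply pow_lt; unfold e; lra). simpl INR. unfold D.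
      replace (1 * (Ch * Rmax 1 Cg) * e ^ m * vnorm x) with (Ch * e ^ m * vnorm x * Rmax 1 Cg) by ring.
      rewrite <- (Rmult_1_r (Ch * e ^ m * vnorm x)) at 1. apply Rmult_le_compat_l; auto.
      apply Rmult_le_pos; nra.
    - change (oppow X (opadd X g h) (S k) x) with (vadd (g (oppow X (opadd X g h) k x)) (h (oppow X (opadd X g h) k x))).
      rewrite (bl_add X _ (BL_pow X h m Hh)).
      change (g (oppow X (opadd X g h) k x)) with (opmul X g (oppow X (opadd X g h) k) x). rewrite Hga.
      eapply Rle_trans. apply vnorm_triangle.
      assert (E2 : oppow X h m (h (oppow X (opadd X g h) k x)) = oppow X h (S m) (oppow X (opadd X g h) k x)).
      { rewrite oppow_succ_r; reflexivity. }
      rewrite E2.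
      assert (B1 : vnorm (oppow X h m (oppow X g (S k) x)) <= D * e ^ (m + S k) * vnorm x).
      { eapply Rle_trans. apply Hbh. eapply Rle_trans. apply Rmult_le_compat_l.
        apply Rmult_le_pos. lra. apply pow_le; unfold e; lra. apply Hbg.
        rewrite pow_add. unfold D. assert (h1 := Rmax_l 1 Cg). assert (h2 := Rmax_r 1 Cg).
        assert (hx := vnorm_nonneg x). assert (hp : 0 < e ^ m) by (apply pow_lt; unfold e; lra).
        assert (hq : 0 < e ^ S k) by (apply pow_lt; unfold e; lra).
        assert (0 <= Ch * e ^ m * (e ^ S k * vnorm x)) by (apply Rmult_le_pos; nra).
        replace (Ch * e ^ m * (Cg * e ^ S k * vnorm x)) with (Cg * (Ch * e ^ m * (e ^ S k * vnorm x))) by ring.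
        replace (Ch * Rmax 1 Cg * (e ^ m * e ^ S k) * vnorm x) with (Rmax 1 Cg * (Ch * e ^ m * (e ^ S k * vnorm x))) by ring.
        apply Rmult_le_compat_r; auto. }
      specialize (IHk (S m) x). replace (S m + k)%nat with (m + S k)%nat in IHk by lia.
      rewrite (S_INR (S k)). lra. }
  exists D. split; auto. intros n x. eapply Rle_trans. apply (Cl n O x).
  simpl (0 + n)%nat. unfold e. replace ((eps/2)^n) with (eps^n / 2^n) by (unfold Rdiv; rewrite Rpow_mult_distr, pow_inv; reflexivity).
  assert (hx := vnorm_nonneg x). assert (h2 := pow2_ge n).
  assert (hp : 0 < 2 ^ n) by (apply pow_lt; lra). assert (he : 0 < eps ^ n) by (apply pow_lt; lra).
  replace (INR (S n) * D * (eps ^ n / 2 ^ n) * vnorm x) with ((INR (S n) / 2 ^ n) * (D * eps ^ n * vnorm x)) by (field; lra).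
  rewrite <- (Rmult_1_l (D * eps ^ n * vnorm x)) at 2. apply Rmult_le_compat_r.
  apply Rmult_le_pos; [apply Rmult_le_pos|]; lra.
  apply Rmult_le_reg_r with (2 ^ n); auto. unfold Rdiv; rewrite Rmult_assoc, Rinv_l; lra.
Qed.

Lemma qn_sub_bound Z z (W : nat -> X -> X) : BL z -> qn z ->
  (forall k x, oppow X Z (S k) x = vadd (oppow X z (S k) x) (vopp (W k x))) ->
  (forall eps, 0 < eps -> exists C, 0 < C /\ forall k x, vnorm (W k x) <= C * eps ^ k * vnorm x) ->
  qn Z.
Proof.
  intros Hz qz HZ HW eps Heps.
  destruct (qz eps Heps) as [C1 [HC1 H1]]. destruct (HW eps Heps) as [C2 [HC2 H2]].
  exists (1 + C1 + C2 / eps). split. { assert (0 < C2/eps) by (apply Rdiv_lt_0_compat; auto). lra. }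
  assert (Hc : 0 < C2 / eps) by (apply Rdiv_lt_0_compat; auto).
  intros n x. assert (hx := vnorm_nonneg x). destruct n.
  - simpl. nra.
  - rewrite HZ. eapply Rle_trans. apply vnorm_triangle. rewrite vnorm_opp.
    specialize (H1 (S n) x). specialize (H2 n x).
    assert (hp : 0 < eps ^ n) by (apply pow_lt; auto).
    assert (E : C2 * eps ^ n * vnorm x = C2 / eps * eps ^ S n * vnorm x) by (simpl; field; lra).
    assert (0 <= eps ^ S n * vnorm x) by (apply Rmult_le_pos; [apply pow_le; lra|lra]).
    nra.
Qed.

Lemma qn_tail_r z V : BL z -> BL V -> qn z -> opmul X V z = Zop X -> opmul X V V = Zop X ->
  (forall eps, 0 < eps -> exists C, 0 < C /\ forall k x, vnorm (oppow X z k (V x)) <= C * eps ^ k * vnorm x) ->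
  qn (opsub X z V).
Proof.
  intros Hz HV qz H1 H2 Hb.
  assert (K1 : forall k x, V (oppow X z (S k) x) = vzero).
  { intros k x. change (opmul X V z (oppow X z k x) = vzero). rewrite H1; reflexivity. }
  assert (K2 : forall k x, V (oppow X z k (V x)) = vzero).
  { intros [|k] x. change (opmul X V V x = vzero). rewrite H2; reflexivity. apply K1. }
  apply (qn_sub_bound _ z (fun k => opmul X (oppow X z k) V)); auto.
  intros k x. induction k as [|k IH] in x |- *. reflexivity.
  change (oppow X (opsub X z V) (S (S k)) x) with (vadd (z (oppow X (opsub X z V) (S k) x)) (vopp (V (oppow X (opsub X z V) (S k) x)))).
  rewrite !IH. unfold opmul.
  assert (HzS := BL_pow X z (S k) Hz). assert (Hzk := BL_pow X z k Hz). lin.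
  rewrite K1, K2. change (z (oppow X z (S k) x)) with (oppow X z (S (S k)) x).
  change (z (oppow X z k (V x))) with (oppow X z (S k) (V x)). vgroup.
Qed.

Lemma qn_tail_l z V : BL z -> BL V -> qn z -> opmul X z V = Zop X -> opmul X V V = Zop X ->
  (forall eps, 0 < eps -> exists C, 0 < C /\ forall k x, vnorm (V (oppow X z k x)) <= C * eps ^ k * vnorm x) ->
  qn (opsub X z V).
Proof.
  intros Hz HV qz H1 H2 Hb.
  assert (K1 : forall y, z (V y) = vzero) by (intro y; change (opmul X z V y = vzero); rewrite H1; reflexivity).
  assert (K2 : forall y, V (V y) = vzero) by (intro y; change (opmul X V V y = vzero); rewrite H2; reflexivity).
  apply (qn_sub_bound _ z (fun k => opmul X V (oppow X z k))); auto.
  intros k x. induction k as [|k IH] in x |- *. reflexivity.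
  change (oppow X (opsub X z V) (S (S k)) x) with (vadd (z (oppow X (opsub X z V) (S k) x)) (vopp (V (oppow X (opsub X z V) (S k) x)))).
  rewrite !IH. unfold opmul.
  assert (HzS := BL_pow X z (S k) Hz). assert (Hzk := BL_pow X z k Hz). lin.
  rewrite !K1, !K2. change (z (oppow X z (S k) x)) with (oppow X z (S (S k)) x).
  change (V (z (oppow X z k x))) with (V (oppow X z (S k) x)). vgroup.
Qed.

Lemma qn_pow3 r : BL r -> qn r -> qn (opmul X r (opmul X r r)).
Proof.
  intros Hr qr eps Heps. set (e := Rmin eps 1).
  assert (He : 0 < e) by (unfold e; apply Rmin_glb_lt; lra).
  assert (He1 : e <= 1) by apply Rmin_r. assert (He2 : e <= eps) by apply Rmin_l.
  destruct (qr e He) as [C [HC Hb]]. exists C; split; auto. intros n x.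
  change (oppow X (opmul X r (opmul X r r)) n x) with (oppow X (oppow X r 3) n x).
  rewrite <- oppow_mul. eapply Rle_trans. apply Hb. rewrite pow_mult.
  apply Rmult_le_compat_r. apply vnorm_nonneg. apply Rmult_le_compat_l. lra.
  apply pow_incr. split. apply pow_le; lra.
  simpl. assert (0 <= e * e <= 1) by nra. nra.
Qed.

Lemma qn_of_pow3 r : BL r -> qn (opmul X r (opmul X r r)) -> qn r.
Proof.
  intros Hr q3 eps Heps. destruct (bl_bnd X r Hr) as [M [HM0 HM]].
  destruct (q3 (eps ^ 3) ltac:(apply pow_lt; lra)) as [C [HC Hb]].
  set (K := (1 + M / eps) ^ 2).
  assert (HK : 1 <= K) by (apply pow_R1_Rle; assert (0 <= M/eps) by (apply div_nonneg; lra); lra).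
  exists (C * K). split. nra. intros n x.
  rewrite (Nat.div_mod_eq n 3). set (m := (n / 3)%nat). set (j := (n mod 3)%nat).
  assert (Hj : (j < 3)%nat) by (apply Nat.mod_upper_bound; lia).
  rewrite Nat.add_comm, oppow_add, oppow_mul. unfold opmul.
  change (oppow X (oppow X r 3) m x) with (oppow X (opmul X r (opmul X r r)) m x).
  assert (Hpow : forall j y, vnorm (oppow X r j y) <= M ^ j * vnorm y).
  { induction j0 as [|j0 IH]; intro y. simpl; lra. simpl. unfold opmul.
    eapply Rle_trans. apply HM. rewrite Rmult_assoc. apply Rmult_le_compat_l; auto. }
  eapply Rle_trans. apply Hpow. eapply Rle_trans. apply Rmult_le_compat_l. apply pow_le; auto. apply Hb.
  rewrite <- pow_mult, pow_add.
  assert (hx := vnorm_nonneg x). assert (hp : 0 < eps ^ (3 * m)) by (apply pow_lt; lra).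
  assert (Mj : M ^ j <= K * eps ^ j).
  { replace (M ^ j) with ((M / eps) ^ j * eps ^ j).
    2: { unfold Rdiv. rewrite Rpow_mult_distr, pow_inv, Rmult_assoc, Rinv_l. ring. apply pow_nonzero; lra. }
    apply Rmult_le_compat_r. apply pow_le; lra. unfold K.
    assert (h0 : 0 <= M / eps) by (apply div_nonneg; lra).
    destruct j as [|[|[|j]]]; simpl; nra || lia. }
  assert (0 <= C * eps ^ (3 * m) * vnorm x) by (apply Rmult_le_pos; nra).
  apply Rle_trans with (K * eps ^ j * (C * eps ^ (3 * m) * vnorm x)).
  apply Rmult_le_compat_r; auto. right; ring.
Qed.

End QN.
Section Series.
Variable X : CBanach.
Notation BL := (BL X).

Fixpoint psum (F : nat -> X -> X) (n : nat) (x : X) : X :=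
  match n with O => vzero | S k => vadd (psum F k x) (F k x) end.
Definition vlim (u : nat -> X) (l : X) := forall eps, 0 < eps -> exists N, forall n, (n >= N)%nat ->
  vnorm (vadd (u n) (vopp l)) < eps.
Definition sums (F : nat -> X -> X) (S : X -> X) := forall x, vlim (fun n => psum F n x) (S x).
Definition gb (F : nat -> X -> X) (K : R) := forall n x, vnorm (F n x) <= K * (/2) ^ n * vnorm x.

Lemma vlim_unique u l l' : vlim u l -> vlim u l' -> l = l'.
Proof.
  intros H1 H2. assert (E : vadd l (vopp l') = vzero).
  { apply vnorm_eq0_iff_le. intros e He.
    destruct (H1 (e/2) ltac:(lra)) as [N1 HN1]. destruct (H2 (e/2) ltac:(lra)) as [N2 HN2].
    specialize (HN1 (Nat.max N1 N2) ltac:(lia)). specialize (HN2 (Nat.max N1 N2) ltac:(lia)).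
    eapply Rle_trans. apply (vnorm_sub_tri X l (u (Nat.max N1 N2)) l').
    rewrite vnorm_sub_sym in HN1. lra. }
  rewrite <- (vopp_vopp X l'). apply vopp_unique. rewrite vadd_comm. exact E.
Qed.

Lemma vlim_add u v l m : vlim u l -> vlim v m -> vlim (fun n => vadd (u n) (v n)) (vadd l m).
Proof.
  intros H1 H2 e He. destruct (H1 (e/2) ltac:(lra)) as [N1 HN1]. destruct (H2 (e/2) ltac:(lra)) as [N2 HN2].
  exists (Nat.max N1 N2). intros n Hn. specialize (HN1 n ltac:(lia)). specialize (HN2 n ltac:(lia)).
  replace (vadd (vadd (u n) (v n)) (vopp (vadd l m))) with (vadd (vadd (u n) (vopp l)) (vadd (v n) (vopp m))) by vgroup.
  eapply Rle_lt_trans. apply vnorm_triangle. lra.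
Qed.

Lemma vlim_bl A u l : BL A -> vlim u l -> vlim (fun n => A (u n)) (A l).
Proof.
  intros HA H e He. destruct (bl_bnd X A HA) as [M [HM0 HM]].
  destruct (H (e / (M + 1)) ltac:(apply Rdiv_lt_0_compat; lra)) as [N HN].
  exists N. intros n Hn. specialize (HN n Hn).
  rewrite <- (bl_opp X A HA), <- (bl_add X A HA). eapply Rle_lt_trans. apply HM.
  apply Rle_lt_trans with ((M + 1) * vnorm (vadd (u n) (vopp l))).
  apply Rmult_le_compat_r. apply vnorm_nonneg. lra.
  apply Rmult_lt_reg_l with (/ (M + 1)). apply Rinv_0_lt_compat; lra.
  rewrite <- Rmult_assoc, Rinv_l, Rmult_1_l by lra. unfold Rdiv in HN; lra.
Qed.

Lemma vlim_scal c u l : vlim u l -> vlim (fun n => vscal c (u n)) (vscal c l).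
Proof.
  intros H e He.
  destruct (H (e / (Cmod c + 1)) ltac:(apply Rdiv_lt_0_compat; [lra| unfold Cmod; assert (h:=sqrt_pos (Cre c ^ 2 + Cim c ^ 2)); lra])) as [N HN].
  exists N. intros n Hn. specialize (HN n Hn).
  assert (h : 0 <= Cmod c) by apply sqrt_pos.
  rewrite <- vscal_opp, <- vscal_addv, vnorm_scal.
  apply Rle_lt_trans with ((Cmod c + 1) * vnorm (vadd (u n) (vopp l))).
  apply Rmult_le_compat_r. apply vnorm_nonneg. lra.
  apply Rmult_lt_reg_l with (/ (Cmod c + 1)). apply Rinv_0_lt_compat; lra.
  rewrite <- Rmult_assoc, Rinv_l, Rmult_1_l by lra. unfold Rdiv in HN; lra.
Qed.

Lemma vlim_shift u l : vlim (fun n => u (S n)) l -> vlim u l.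
Proof. intros H e He. destruct (H e He) as [N HN]. exists (S N). intros n Hn.
  destruct n. lia. apply HN; lia. Qed.

Lemma vlim_norm_le u l B : vlim u l -> (forall n, vnorm (u n) <= B) -> vnorm l <= B.
Proof.
  intros H Hb. apply Rnot_lt_le; intro Hl.
  destruct (H (vnorm l - B) ltac:(lra)) as [N HN]. specialize (HN N (le_n _)).
  assert (T := vnorm_triangle (vadd (u N) (vopp l)) (vopp (u N))).
  replace (vadd (vadd (u N) (vopp l)) (vopp (u N))) with (vopp l) in T by vgroup.
  rewrite !vnorm_opp in T. specialize (Hb N). lra.
Qed.

Lemma psum_bl F n : (forall k, BL (F k)) -> BL (psum F n).
Proof.
  intro HF. induction n; simpl.
  - apply BL_Z.
  - change (BL (opadd X (psum F n) (F n))). apply BL_add; auto.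
Qed.

Lemma psum_mul_l A F n x : BL A -> A (psum F n x) = psum (fun k => opmul X A (F k)) n x.
Proof. intro HA. induction n; simpl. apply bl_zero; auto. rewrite (bl_add X A HA), IHn; reflexivity. Qed.
Lemma psum_mul_r B F n x : psum F n (B x) = psum (fun k => opmul X (F k) B) n x.
Proof. induction n; simpl; auto. rewrite IHn; reflexivity. Qed.
Lemma psum_add F G n x : psum (fun k => opadd X (F k) (G k)) n x = vadd (psum F n x) (psum G n x).
Proof. induction n; simpl. rewrite vadd_0; auto. rewrite IHn. unfold opadd. vgroup. Qed.
Lemma psum_shift F n x : psum F (S n) x = vadd (F O x) (psum (fun k => F (S k)) n x).
Proof. induction n; simpl. rewrite vadd_0l, vadd_0; auto. simpl in IHn. rewrite IHn. vgroup. Qed.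

Lemma psum_cauchy F K : 0 <= K -> gb F K -> forall n d x,
  vnorm (vadd (psum F (n + d) x) (vopp (psum F n x))) <= 2 * K * ((/2) ^ n - (/2) ^ (n + d)) * vnorm x.
Proof.
  intros HK Hg n d x. induction d.
  - rewrite Nat.add_0_r, vadd_opp, vnorm_zero. right; ring.
  - replace (n + S d)%nat with (S (n + d)) by lia. simpl psum.
    replace (vadd (vadd (psum F (n + d) x) (F (n + d)%nat x)) (vopp (psum F n x)))
      with (vadd (vadd (psum F (n + d) x) (vopp (psum F n x))) (F (n + d)%nat x)) by vgroup.
    eapply Rle_trans. apply vnorm_triangle. specialize (Hg (n + d)%nat x).
    simpl. lra.
Qed.

Lemma sums_exists F K : (forall k, BL (F k)) -> 0 <= K -> gb F K -> exists S, BL S /\ sums F S.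
Proof.
  intros HF HK Hg.
  assert (Hl : forall x, exists l, vlim (fun n => psum F n x) l).
  { intro x. apply vcomplete. intros e He.
    assert (hx := vnorm_nonneg x).
    destruct (pow_lt_1_zero (/2) ltac:(rewrite Rabs_pos_eq; lra) (e / (2 * K * vnorm x + 1)) ltac:(apply Rdiv_lt_0_compat; nra)) as [N HN].
    exists N. intros m n Hm Hn.
    assert (Hgen : forall a b, (a >= N)%nat -> (b >= a)%nat ->
       vnorm (vadd (psum F b x) (vopp (psum F a x))) < e).
    { intros a b Ha Hb. replace b with (a + (b - a))%nat by lia.
      eapply Rle_lt_trans. apply (psum_cauchy F K); auto.
      specialize (HN a Ha). rewrite Rabs_pos_eq in HN by (apply pow_le; lra).
      assert (hp : 0 <= (/2) ^ (a + (b - a))) by (apply pow_le; lra).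
      assert (h3 : 0 <= 2 * K * vnorm x * (/2) ^ (a + (b - a))) by (apply Rmult_le_pos; nra).
      assert (h2 : 2 * K * ((/ 2) ^ a - (/ 2) ^ (a + (b - a))) * vnorm x <= (2 * K * vnorm x) * (/2) ^ a) by nra.
      eapply Rle_lt_trans. apply h2.
      assert (Hpos : 0 < 2 * K * vnorm x + 1) by nra.
      assert (HN2 : (/2) ^ a * (2 * K * vnorm x + 1) < e).
      { apply (Rmult_lt_compat_r (2 * K * vnorm x + 1)) in HN; auto.
        replace (e / (2 * K * vnorm x + 1) * (2 * K * vnorm x + 1)) with e in HN by (field; lra). lra. }
      assert (0 <= (/2) ^ a) by (apply pow_le; lra). nra. }
    destruct (Compare_dec.le_ge_dec m n) as [H|H].
    - rewrite vnorm_sub_sym. apply Hgen; auto.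
    - apply Hgen; auto. }
  exists (fun x => proj1_sig (constructive_indefinite_description _ (Hl x))).
  assert (Hs : sums F (fun x => proj1_sig (constructive_indefinite_description _ (Hl x)))).
  { intro x. destruct (constructive_indefinite_description _ (Hl x)); auto. }
  split; auto. set (S := fun x => _) in Hs |- *.
  split; [|split].
  - intros x y. apply (vlim_unique (fun n => psum F n (vadd x y))). apply Hs.
    replace (fun n => psum F n (vadd x y)) with (fun n => vadd (psum F n x) (psum F n y)).
    apply vlim_add; apply Hs.
    apply functional_extensionality; intro n. rewrite (bl_add X _ (psum_bl F n HF)); auto.
  - intros c x. apply (vlim_unique (fun n => psum F n (vscal c x))). apply Hs.
    replace (fun n => psum F n (vscal c x)) with (fun n => vscal c (psum F n x)).
    apply vlim_scal; apply Hs.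
    apply functional_extensionality; intro n. rewrite (bl_scal X _ (psum_bl F n HF)); auto.
  - exists (2 * K). intro x. apply (vlim_norm_le (fun n => psum F n x)). apply Hs.
    intro n. assert (h := psum_cauchy F K HK Hg O n x). simpl psum in h at 2.
    rewrite vopp_zero, vadd_0 in h. simpl in h. eapply Rle_trans. apply h.
    assert (0 <= (/2) ^ n) by (apply pow_le; lra). assert (hx := vnorm_nonneg x).
    assert (0 <= K * vnorm x * (/2) ^ n) by (apply Rmult_le_pos; [apply Rmult_le_pos|]; lra). nra.
Qed.

Lemma sums_bound F S K : sums F S -> 0 <= K -> gb F K -> forall x, vnorm (S x) <= 2 * K * vnorm x.
Proof.
  intros Hs HK Hg x. apply (vlim_norm_le (fun n => psum F n x)). apply Hs.
  intro n. assert (h := psum_cauchy F K HK Hg O n x). simpl psum in h at 2.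
  rewrite vopp_zero, vadd_0 in h. simpl in h. eapply Rle_trans. apply h.
  assert (0 <= (/2) ^ n) by (apply pow_le; lra). assert (hx := vnorm_nonneg x).
  assert (0 <= K * vnorm x * (/2) ^ n) by (apply Rmult_le_pos; [apply Rmult_le_pos|]; lra). nra.
Qed.

Lemma sums_unique F S T : sums F S -> sums F T -> S = T.
Proof. intros H1 H2. apply functional_extensionality; intro x. eapply vlim_unique; eauto. Qed.

Lemma sums_mul_l A F S : BL A -> sums F S -> sums (fun n => opmul X A (F n)) (opmul X A S).
Proof.
  intros HA Hs x. unfold opmul at 2.
  replace (fun n => psum (fun n0 => opmul X A (F n0)) n x) with (fun n => A (psum F n x)).
  apply vlim_bl; auto.
  apply functional_extensionality; intro n. apply psum_mul_l; auto.
Qed.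

Lemma sums_mul_r B F S : sums F S -> sums (fun n => opmul X (F n) B) (opmul X S B).
Proof.
  intros Hs x. unfold opmul at 2.
  replace (fun n => psum (fun n0 => opmul X (F n0) B) n x) with (fun n => psum F n (B x)).
  apply Hs. apply functional_extensionality; intro n. apply psum_mul_r.
Qed.

Lemma sums_add F G S T : sums F S -> sums G T -> sums (fun n => opadd X (F n) (G n)) (opadd X S T).
Proof.
  intros H1 H2 x. unfold opadd at 2.
  replace (fun n => psum (fun k => opadd X (F k) (G k)) n x) with (fun n => vadd (psum F n x) (psum G n x)).
  apply vlim_add; auto. apply functional_extensionality; intro n. symmetry; apply psum_add.
Qed.

Lemma sums_ext F G S : (forall n, F n = G n) -> sums F S -> sums G S.
Proof. intros H Hs. replace G with F; auto. apply functional_extensionality; auto. Qed.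

Lemma sums_shift F T : sums (fun n => F (S n)) T -> sums F (opadd X (F O) T).
Proof.
  intros H x. apply vlim_shift. unfold opadd.
  replace (fun n => psum F (S n) x) with (fun n => vadd (F O x) (psum (fun k => F (S k)) n x)).
  apply vlim_add; auto. intros e He; exists O; intros; rewrite vadd_opp, vnorm_zero; auto.
  apply functional_extensionality; intro n. symmetry; apply psum_shift.
Qed.

Lemma sums_zero : sums (fun _ => Zop X) (Zop X).
Proof.
  intros x e He. exists O. intros n _. assert (psum (fun _ => Zop X) n x = vzero).
  { induction n; simpl; auto. rewrite IHn; unfold Zop; apply vadd_0. }
  rewrite H. unfold Zop. rewrite vadd_opp, vnorm_zero; auto.
Qed.

Lemma sums_single F : (forall n, F (S n) = Zop X) -> sums F (F O).
Proof.
  intro H. replace (F O) with (opadd X (F O) (Zop X)).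
  apply sums_shift. apply (sums_ext (fun _ => Zop X)); auto using sums_zero.
  apply functional_extensionality; intro x; unfold opadd, Zop; apply vadd_0.
Qed.

Lemma sums_BL F S K : (forall k, BL (F k)) -> 0 <= K -> gb F K -> sums F S -> BL S.
Proof.
  intros HF HK Hg Hs. destruct (sums_exists F K HF HK Hg) as [T [HT HsT]].
  rewrite (sums_unique F S T); auto.
Qed.

End Series.
Ltac bl := repeat (match goal with
  | |- BL _ (opmul _ _ _) => apply BL_mul
  | |- BL _ (opadd _ _ _) => apply BL_add
  | |- BL _ (opsub _ _ _) => apply BL_sub
  | |- BL _ (oppow _ _ _) => apply BL_pow
  | |- BL _ (Iop _) => apply BL_I
  | |- BL _ (Zop _) => apply BL_Z
  | H : BL _ ?T |- BL _ ?T => exact H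
  | H : bounded_linear _ ?T |- BL _ ?T => exact H
  end).

Section GD.
Variable X : CBanach.
Notation BL := (BL X).
Notation qn := (qn X).
Notation "A ** B" := (opmul X A B) (at level 40, left associativity).
Notation "A +++ B" := (opadd X A B) (at level 50, left associativity).
Notation "A --- B" := (opsub X A B) (at level 50, left associativity).

Definition gd (T S : X -> X) := BL S /\ S ** (T ** S) = S /\ T ** S = S ** T /\
  qn (T --- T ** T ** S).

Lemma gd_has T : BL T -> (exists S, gd T S) -> has_gDrazin X T.
Proof.
  intros HT [S [HS [H1 [H2 H3]]]]. exists S. split; auto. split; auto. split; auto.
  apply quasi_of_qn; auto. bl.
Qed.

Lemma has_gd T : BL T -> has_gDrazin X T -> exists S, gd T S.
Proof.
  intros HT [S [HS [H1 [H2 H3]]]]. exists S. split; auto. split; auto. split; auto.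
  apply qn_of_quasi; auto. bl.
Qed.

Lemma pw (A B : X -> X) : A = B -> forall z, A z = B z.
Proof. intros ->; auto. Qed.

Lemma gd_cline x y w : BL x -> BL y -> gd (x ** y) w -> gd (y ** x) (y ** w ** w ** x).
Proof.
  intros Hx Hy [Hw [H1 [H2 H3]]].
  assert (R1 : forall z, w (x (y z)) = x (y (w z))) by (intro z; symmetry; apply (pw _ _ H2 z)).
  assert (R2 : forall z, w (x (y (w z))) = w z) by (apply (pw _ _ H1)).
  split; [|split; [|split]].
  - bl.
  - opext. rewrite R1, R2, R2. reflexivity.
  - opext. rewrite <- R1, R2. rewrite R1, R2. reflexivity.
  - set (rho := x ** y --- x ** y ** (x ** y) ** w) in H3.
    apply (qn_conj X _ y rho (x --- x ** y ** w ** x)); auto.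
    + bl.
    + unfold rho; bl.
    + intro k. induction k.
      * apply functional_extensionality; intro z; cbn [oppow]. unfold opmul, opsub. lin. rewrite <- R1, R2. reflexivity.
      * apply functional_extensionality; intro z.
        change (oppow X (y ** x --- y ** x ** (y ** x) ** (y ** w ** w ** x)) (S (S k)) z)
          with ((y ** x --- y ** x ** (y ** x) ** (y ** w ** w ** x)) (oppow X (y ** x --- y ** x ** (y ** x) ** (y ** w ** w ** x)) (S k) z)).
        rewrite IHk.
        change ((y ** (oppow X rho (S k) ** (x --- x ** y ** w ** x))) z) with
           (y (rho (oppow X rho k ((x --- x ** y ** w ** x) z)))).
        set (v := oppow X rho k ((x --- x ** y ** w ** x) z)).
        unfold rho in *. unfold opmul, opsub in *. lin. rewrite R1, R2. reflexivity.
Qed.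

Lemma vsub_eq0 (a b : X) : vadd a (vopp b) = vzero -> a = b.
Proof. intro H. rewrite <- (vopp_vopp X b). apply vopp_unique. rewrite vadd_comm; auto. Qed.

Lemma gd_cube x s : BL x -> gd x s -> gd (x ** (x ** x)) (s ** (s ** s)).
Proof.
  intros Hx [Hs [H1 [H2 H3]]].
  assert (C : forall z, x (s z) = s (x z)) by (apply (pw _ _ H2)).
  assert (P : forall z, s (x (s z)) = s z) by (apply (pw _ _ H1)).
  assert (Q : forall z, x (x (s (s z))) = x (s z)) by (intro z; rewrite (C (s z)), P; reflexivity).
  split; [|split; [|split]].
  - bl.
  - opext. rewrite C, P, C, P, P. reflexivity.
  - opext. repeat rewrite C. reflexivity.
  - replace (x ** (x ** x) --- x ** (x ** x) ** (x ** (x ** x)) ** (s ** (s ** s)))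
      with ((x --- x ** x ** s) ** ((x --- x ** x ** s) ** (x --- x ** x ** s))).
    apply qn_pow3; auto. bl.
    opext. lin. repeat rewrite <- C. repeat rewrite Q. vgroup.
Qed.

Lemma gd_cuberoot c w : BL c -> gd (c ** (c ** c)) w -> c ** w = w ** c -> gd c (c ** c ** w).
Proof.
  intros Hc [Hw [H1 [H2 H3]]] Hcw.
  assert (Cw : forall z, c (w z) = w (c z)) by (apply (pw _ _ Hcw)).
  assert (Pw : forall z, w (c (c (c (w z)))) = w z) by (apply (pw _ _ H1)).
  assert (Q : forall z, c (c (c (w (w z)))) = w z).
  { intro z. rewrite (Cw (w z)), (Cw (c (w z))), (Cw (c (c (w z)))), Pw. reflexivity. }
  split; [|split; [|split]].
  - bl.
  - opext. rewrite Pw. reflexivity.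
  - opext. rewrite <- Cw. reflexivity.
  - apply qn_of_pow3. bl.
    replace ((c --- c ** c ** (c ** c ** w)) ** ((c --- c ** c ** (c ** c ** w)) ** (c --- c ** c ** (c ** c ** w))))
      with (c ** (c ** c) --- c ** (c ** c) ** (c ** (c ** c)) ** w); auto.
    opext. lin. repeat rewrite <- Cw. repeat rewrite Q. vgroup.
Qed.

Lemma gd_comm y w z : BL y -> BL z -> gd y w -> z ** y = y ** z -> z ** w = w ** z.
Proof.
  intros Hy Hz [Hw [H1 [H2 H3]]] Hzy.
  assert (R1 : forall v, w (y (w v)) = w v) by (apply (pw _ _ H1)).
  assert (R2 : forall v, y (w v) = w (y v)) by (apply (pw _ _ H2)).
  assert (Rz : forall v, z (y v) = y (z v)) by (apply (pw _ _ Hzy)).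
  assert (Rw : forall v, y (w (w v)) = w v) by (intro v; rewrite R2, R1; reflexivity).
  set (rho := y --- y ** y ** w) in H3.
  assert (Hrho : BL rho) by (unfold rho; bl).
  assert (Ryr : forall u, rho (y u) = rho (rho u)).
  { intro u. unfold rho, opsub, opmul. lin. repeat (rewrite Rz || rewrite <- R2). repeat rewrite Rw. vgroup. }
  assert (yRr : forall u, y (rho u) = rho (rho u)).
  { intro u. unfold rho, opsub, opmul. lin. repeat rewrite <- R2. repeat rewrite Rw. vgroup. }
  assert (Hwp : forall n u, oppow X w n (y u) = y (oppow X w n u)).
  { intros n u. symmetry. apply (pw _ _ (oppow_comm X y w n H2)). }
  destruct (bl_bnd X w Hw) as [Mw [HMw0 HMw]]. destruct (bl_bnd X z Hz) as [Mz [HMz0 HMz]].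
  set (eps := / (2 * (Mw + 1))).
  assert (Heps : 0 < eps) by (unfold eps; apply Rinv_0_lt_compat; lra).
  assert (HepsM : eps * Mw <= /2).
  { unfold eps. apply Rmult_le_reg_l with (2 * (Mw + 1)). lra.
    rewrite <- Rmult_assoc, Rinv_r by lra. lra. }
  destruct (H3 eps Heps) as [C [HC HCb]].
  assert (Hwn : forall n v, vnorm (oppow X w n v) <= Mw ^ n * vnorm v).
  { induction n; intro v; simpl. lra. unfold opmul. eapply Rle_trans. apply HMw.
    rewrite Rmult_assoc. apply Rmult_le_compat_l; auto. }
  assert (Key : forall n, C * eps ^ n * (Mz * (Mw ^ n)) <= C * Mz * (/2) ^ n).
  { intro n. replace (C * eps ^ n * (Mz * Mw ^ n)) with (C * Mz * (eps ^ n * Mw ^ n)) by ring.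
    rewrite <- Rpow_mult_distr. apply Rmult_le_compat_l. nra. apply pow_incr. split; [nra|lra]. }
  assert (T1 : forall v, z (y (w v)) = y (w (z (y (w v))))).
  { assert (Ht : (Iop X --- y ** w) ** (z ** (y ** w)) = Zop X).
    { assert (Hn : forall n, (Iop X --- y ** w) ** (z ** (y ** w)) = oppow X rho (S n) ** (z ** oppow X w (S n))).
      { induction n.
        - apply functional_extensionality; intro v. cbn [oppow]. unfold rho, opmul, opsub, Iop. lin.
          repeat (rewrite Rz || rewrite <- R2). reflexivity.
        - rewrite IHn. apply functional_extensionality; intro v.
          change (oppow X rho (S n) (z (oppow X w (S n) v)) = oppow X rho (S (S n)) (z (oppow X w (S (S n)) v))).
          replace (oppow X w (S n) v) with (y (oppow X w (S (S n)) v)).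
          rewrite Rz, (oppow_succ_r X rho n). unfold opmul at 1. rewrite Ryr.
          rewrite (oppow_succ_r X rho (S n)), (oppow_succ_r X rho n). reflexivity.
          rewrite (oppow_succ_r X w (S n)). unfold opmul at 1. rewrite <- Hwp.
          rewrite (oppow_succ_r X w n). unfold opmul. rewrite R1. reflexivity. }
      apply (zero_of_small X _ (C * Mz) (/2)). lra.
      intros n v. rewrite (Hn n). unfold opmul. eapply Rle_trans. apply HCb.
      eapply Rle_trans. apply Rmult_le_compat_l. apply Rmult_le_pos. lra. apply pow_le; lra. apply HMz.
      eapply Rle_trans. apply Rmult_le_compat_l. apply Rmult_le_pos. lra. apply pow_le; lra.
      apply Rmult_le_compat_l. auto. apply Hwn.
      assert (hv := vnorm_nonneg v). specialize (Key (S n)).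
      assert (h2 : C * Mz * (/ 2) ^ S n <= C * Mz * (/2) ^ n).
      { apply Rmult_le_compat_l. nra. simpl. assert (0 <= (/2) ^ n) by (apply pow_le; lra). lra. }
      replace (C * eps ^ S n * (Mz * (Mw ^ S n * vnorm v))) with (C * eps ^ S n * (Mz * Mw ^ S n) * vnorm v) by ring.
      apply Rmult_le_compat_r; auto. lra. }
    intro v. apply vsub_eq0. change (@vzero X) with (Zop X v). rewrite <- (pw _ _ Ht v). unfold opsub, opmul, Iop. reflexivity. }
  assert (T2 : forall v, y (w (z v)) = y (w (z (y (w v))))).
  { assert (Ht : (y ** w) ** (z ** (Iop X --- y ** w)) = Zop X).
    { assert (Hn : forall n, (y ** w) ** (z ** (Iop X --- y ** w)) = oppow X w (S n) ** (z ** oppow X rho (S n))).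
      { induction n.
        - apply functional_extensionality; intro v. cbn [oppow]. unfold rho, opmul, opsub, Iop. lin.
          repeat (rewrite Rz || rewrite <- R2). reflexivity.
        - rewrite IHn. apply functional_extensionality; intro v.
          change (oppow X w (S n) (z (oppow X rho (S n) v)) = oppow X w (S (S n)) (z (oppow X rho (S (S n)) v))).
          replace (oppow X w (S n) (z (oppow X rho (S n) v))) with (oppow X w (S (S n)) (y (z (oppow X rho (S n) v)))).
          rewrite <- Rz. cbn [oppow]. unfold opmul at 3. rewrite yRr. reflexivity.
          rewrite (oppow_succ_r X w (S n)). unfold opmul at 1. rewrite (oppow_succ_r X w n). unfold opmul.
          rewrite <- R2, R1. reflexivity. }
      apply (zero_of_small X _ (C * Mz) (/2)). lra.
      intros n v. rewrite (Hn n). unfold opmul. eapply Rle_trans. apply Hwn.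
      eapply Rle_trans. apply Rmult_le_compat_l. apply pow_le; lra. apply HMz.
      eapply Rle_trans. apply Rmult_le_compat_l. apply pow_le; lra.
      apply Rmult_le_compat_l. auto. apply HCb.
      assert (hv := vnorm_nonneg v). specialize (Key (S n)).
      assert (h2 : C * Mz * (/ 2) ^ S n <= C * Mz * (/2) ^ n).
      { apply Rmult_le_compat_l. nra. simpl. assert (0 <= (/2) ^ n) by (apply pow_le; lra). lra. }
      replace (Mw ^ S n * (Mz * (C * eps ^ S n * vnorm v))) with (C * eps ^ S n * (Mz * Mw ^ S n) * vnorm v) by ring.
      apply Rmult_le_compat_r; auto. lra. }
    intro v. apply vsub_eq0. change (@vzero X) with (Zop X v). rewrite <- (pw _ _ Ht v). unfold opsub, opmul, Iop. lin. reflexivity. }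
  assert (E : forall v, z (y (w v)) = y (w (z v))) by (intro v; rewrite T1, (T2 v); reflexivity).
  apply functional_extensionality; intro v. unfold opmul.
  rewrite <- (R1 (z v)). rewrite <- E, Rz, <- R2, <- E, Rw. reflexivity.
Qed.

End GD.
Section DQ.
Variable X : CBanach.
Notation BL := (BL X).
Notation qn := (qn X).
Notation "A ** B" := (opmul X A B) (at level 40, left associativity).
Notation "A +++ B" := (opadd X A B) (at level 50, left associativity).
Notation "A --- B" := (opsub X A B) (at level 50, left associativity).

Lemma sums_allzero F S : sums X F S -> (forall n, F n = Zop X) -> S = Zop X.
Proof. intros H HF. apply (sums_unique X F); auto. apply (sums_ext X (fun _ => Zop X)); auto using sums_zero. Qed.

Lemma pow_bound T M : (forall x, vnorm (T x) <= M * vnorm x) -> 0 <= M ->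
  forall n x, vnorm (oppow X T n x) <= M ^ n * vnorm x.
Proof.
  intros HM HM0. induction n; intro x; simpl. lra. unfold opmul. eapply Rle_trans. apply HM.
  rewrite Rmult_assoc. apply Rmult_le_compat_l; auto.
Qed.

Lemma gb_qn (A B : X -> X) : BL A -> BL B -> qn A -> exists K, 0 <= K /\
  gb X (fun n => oppow X A n ** oppow X B (S n)) K.
Proof.
  intros HA HB qA. destruct (bl_bnd X B HB) as [M [HM0 HM]].
  set (eps := / (2 * (M + 1))).
  assert (Heps : 0 < eps) by (unfold eps; apply Rinv_0_lt_compat; lra).
  assert (HepsM : eps * M <= /2).
  { unfold eps. apply Rmult_le_reg_l with (2 * (M + 1)). lra. rewrite <- Rmult_assoc, Rinv_r by lra. lra. }
  destruct (qA eps Heps) as [C [HC Hb]]. exists (C * M). split. nra.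
  intros n x. unfold opmul. eapply Rle_trans. apply Hb.
  assert (h := pow_bound B M HM HM0 (S n) x). assert (hx := vnorm_nonneg x).
  assert (hp : 0 <= C * eps ^ n) by (apply Rmult_le_pos; [lra|apply pow_le; lra]).
  eapply Rle_trans. apply Rmult_le_compat_l; [exact hp|exact h].
  replace (C * eps ^ n * (M ^ S n * vnorm x)) with (C * M * ((eps * M) ^ n) * vnorm x)
    by (rewrite Rpow_mult_distr; simpl; ring).
  apply Rmult_le_compat_r; auto. apply Rmult_le_compat_l. nra.
  apply pow_incr. split; [nra|lra].
Qed.

Lemma gd_addq P P' N : BL P -> BL N -> gd X P P' -> qn N -> P ** N = Zop X ->
  exists s, gd X (P +++ N) s.
Proof.
  intros HP HN [HP' [H1 [H2 Hg]]] qN HPN.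
  assert (R1 : forall z, P' (P (P' z)) = P' z) by apply (pw X _ _ H1).
  assert (R2 : forall z, P (P' z) = P' (P z)) by apply (pw X _ _ H2).
  assert (R0 : forall z, P (N z) = vzero) by (intro z; apply (pw X _ _ HPN z)).
  assert (D1 : forall z, P' (N z) = vzero).
  { intro z. rewrite <- R1, R2, R0. lin. reflexivity. }
  set (F := fun n => oppow X N n ** oppow X P' (S n)).
  assert (HF : forall n, BL (F n)) by (intro n; unfold F; bl).
  destruct (gb_qn N P' HN HP' qN) as [K [HK Hgb]].
  destruct (sums_exists X F K HF HK Hgb) as [s [Hs Hss]].
  assert (Ps : P' ** s = P' ** P').
  { apply (sums_unique X (fun n => P' ** F n)). apply sums_mul_l; auto.
    apply (sums_single X (fun n => P' ** F n)). intro n. apply functional_extensionality; intro z.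
    unfold F, opmul, Zop. cbn [oppow]. unfold opmul. apply D1. }
  assert (PPs : P ** s = P ** P').
  { apply (sums_unique X (fun n => P ** F n)). apply sums_mul_l; auto.
    apply (sums_single X (fun n => P ** F n)). intro n. apply functional_extensionality; intro z.
    unfold F, opmul, Zop. cbn [oppow]. unfold opmul. apply R0. }
  assert (sN : s ** N = Zop X).
  { apply (sums_allzero (fun n => F n ** N)). apply sums_mul_r; auto.
    intro n. apply functional_extensionality; intro z. unfold F. rewrite oppow_succ_r.
    unfold opmul, Zop. rewrite D1. rewrite (bl_zero X (oppow X P' n)) by bl. apply (bl_zero X); bl. }
  set (G := fun n => oppow X N (S n) ** oppow X P' (S n)).
  assert (NsG : sums X G (N ** s)) by (apply (sums_mul_l X N F s HN Hss)).
  assert (sP : s ** P = P' ** P +++ N ** s).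
  { apply (sums_unique X (fun n => F n ** P)). apply sums_mul_r; auto.
    apply (sums_shift X (fun n => F n ** P)). apply (sums_ext X G); auto.
    intro n. apply functional_extensionality; intro z.
    change (oppow X N (S n) (oppow X P' (S n) z) = oppow X N (S n) (oppow X P' (S (S n)) (P z))).
    rewrite (oppow_succ_r X P' (S n)), (oppow_succ_r X P' n). unfold opmul.
    rewrite <- R2, R1. reflexivity. }
  assert (cs : (P +++ N) ** s = P ** P' +++ N ** s).
  { apply functional_extensionality; intro z. unfold opadd, opmul.
    rewrite (pw X _ _ PPs z : P (s z) = P (P' z)). reflexivity. }
  assert (sc : s ** (P +++ N) = (P +++ N) ** s).
  { rewrite cs. apply functional_extensionality; intro z. unfold opadd, opmul. lin.
    rewrite (pw X _ _ sP z : s (P z) = vadd (P' (P z)) (N (s z))), (pw X _ _ sN z : s (N z) = vzero).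
    rewrite R2, vadd_0. reflexivity. }
  exists s. split; [|split; [|split]]; auto.
  -
    transitivity ((P ** P' +++ N ** s) ** s).
    { rewrite <- cs. change (s ** ((P +++ N) ** s)) with ((s ** (P +++ N)) ** s). rewrite sc. reflexivity. }
    assert (Nss : sums X (fun n => F (S n)) (N ** s ** s)).
    { apply (sums_ext X (fun n => G n ** s)). 2: apply sums_mul_r; auto.
      intro n. apply functional_extensionality; intro z.
      change (oppow X N (S n) (oppow X P' (S n) (s z)) = oppow X N (S n) (oppow X P' (S (S n)) z)).
      rewrite (oppow_succ_r X P' (S n)), (oppow_succ_r X P' n). unfold opmul.
      rewrite (pw X _ _ Ps (P' z) : P' (s (P' z)) = P' (P' (P' z))) || idtac.
      rewrite (pw X _ _ Ps z : P' (s z) = P' (P' z)). reflexivity. }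
    assert (sF := sums_shift X F _ Nss).
    rewrite (sums_unique X F s _ Hss sF) at 3.
    apply functional_extensionality; intro z. unfold opadd, opmul.
    rewrite (pw X _ _ Ps z : P' (s z) = P' (P' z)). rewrite R2, R1. reflexivity.
  -
    set (g := P --- P ** P ** P'). set (h := N --- N ** P ** P').
    set (V := N ** (N ** s)).
    assert (Hgg : BL g) by (unfold g; bl). assert (Hhb : BL h) by (unfold h; bl).
    assert (HV : BL V) by (unfold V; bl).
    assert (E1 : (P +++ N) --- (P +++ N) ** (P +++ N) ** s = (g +++ h) --- V).
    { change ((P +++ N) ** (P +++ N) ** s) with ((P +++ N) ** ((P +++ N) ** s)). rewrite cs.
      apply functional_extensionality; intro z. unfold g, h, V, opadd, opsub, opmul. lin.
      rewrite R0. vgroup. }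
    rewrite E1.
    assert (R3 : forall z, P' (P (P (P' z))) = P' (P z)) by (intro z; rewrite R2, R1; reflexivity).
    assert (zN : forall u, (g +++ h) (N u) = N (N u)).
    { intro u. unfold g, h, opadd, opsub, opmul. rewrite !D1, R0. lin. vgroup. }
    assert (sz : s ** (g +++ h) = Zop X).
    { apply (sums_allzero (fun n => F n ** (g +++ h))). apply sums_mul_r; auto.
      intro n. apply functional_extensionality; intro z.
      change (oppow X N n (oppow X P' (S n) ((g +++ h) z)) = vzero).
      rewrite (oppow_succ_r X P' n). unfold g, h, opmul, opadd, opsub. lin. rewrite !D1, R3. lin.
      rewrite vadd_opp, vopp_zero, !vadd_0. rewrite (bl_zero X (oppow X P' n)) by bl. apply (bl_zero X); bl. }
    apply qn_tail_r; auto. bl.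
    + apply qn_add0; auto.
      * apply (qn_conj X h N N (Iop X --- P ** P')); auto. bl.
        intro k. induction k.
        { apply functional_extensionality; intro z. cbn [oppow]. unfold h, opmul, opsub, Iop. lin. reflexivity. }
        { apply functional_extensionality; intro z.
          change (h (oppow X h (S k) z) = N (N (oppow X N k ((Iop X --- P ** P') z)))).
          rewrite IHk. unfold h at 1. unfold opsub, opmul. cbn [oppow]. unfold opmul. rewrite D1. lin. vgroup. }
      * apply functional_extensionality; intro z. unfold g, h, opadd, opsub, opmul, Zop. lin.
        rewrite !R0, !D1. lin. vgroup.
    + apply functional_extensionality; intro z. unfold V, opmul, Zop.
      rewrite (pw X _ _ sz z : s ((g +++ h) z) = Zop X z). unfold Zop. lin. reflexivity.
    + apply functional_extensionality; intro z. unfold V, opmul, Zop.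
      rewrite (pw X _ _ sN (N (s z)) : s (N (N (s z))) = Zop X (N (s z))). unfold Zop. lin. reflexivity.
    + intros eps Heps. destruct (qN eps Heps) as [C [HC Hb]].
      destruct (bl_bnd X s Hs) as [Ms [HMs0 HMs]].
      exists (C * eps ^ 2 * (Ms + 1)). split. apply Rmult_lt_0_compat. apply Rmult_lt_0_compat; auto. apply pow_lt; auto. lra.
      intros k z.
      assert (Hk : forall k u, oppow X (g +++ h) k (N u) = oppow X N k (N u)).
      { induction k0; intro u. reflexivity.
        change ((g +++ h) (oppow X (g +++ h) k0 (N u)) = N (oppow X N k0 (N u))).
        rewrite IHk0. rewrite <- (oppow_succ_r X N k0 u) || idtac.
        change (oppow X N k0 (N u)) with (oppow X N k0 (N u)).
        assert (E : oppow X N k0 (N u) = N (oppow X N k0 u)).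
        { rewrite <- (oppow_commT X N k0) || idtac. apply (pw X _ _ (eq_sym (oppow_commT X N k0)) u). }
        rewrite E, zN. reflexivity. }
      unfold V, opmul. rewrite Hk.
      replace (oppow X N k (N (N (s z)))) with (oppow X N (S (S k)) (s z)).
      eapply Rle_trans. apply Hb. eapply Rle_trans. apply Rmult_le_compat_l.
      apply Rmult_le_pos. lra. apply pow_le; lra. apply HMs.
      assert (hz := vnorm_nonneg z). assert (hp : 0 < eps ^ k) by (apply pow_lt; lra).
      replace (C * eps ^ S (S k) * (Ms * vnorm z)) with (C * eps ^ 2 * Ms * (eps ^ k * vnorm z)) by (simpl; ring).
      replace (C * eps ^ 2 * (Ms + 1) * eps ^ k * vnorm z) with (C * eps ^ 2 * (Ms + 1) * (eps ^ k * vnorm z)) by ring.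
      apply Rmult_le_compat_r. nra. apply Rmult_le_compat_l. assert (0 < eps ^ 2) by (apply pow_lt; lra). nra. lra.
      rewrite (oppow_succ_r X N (S k)), (oppow_succ_r X N k). reflexivity.
Qed.
End DQ.
Section DG.
Variable X : CBanach.
Notation BL := (BL X).
Notation qn := (qn X).
Notation "A ** B" := (opmul X A B) (at level 40, left associativity).
Notation "A +++ B" := (opadd X A B) (at level 50, left associativity).
Notation "A --- B" := (opsub X A B) (at level 50, left associativity).

Lemma gb_fam (B A Cc : X -> X) : BL A -> BL B -> BL Cc -> qn A -> exists K, 0 <= K /\
  gb X (fun n => oppow X B (S n) ** (oppow X A n ** Cc)) K.
Proof.
  intros HA HB HC qA. destruct (bl_bnd X B HB) as [M [HM0 HM]].
  destruct (bl_bnd X Cc HC) as [Mc [HMc0 HMc]].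
  set (eps := / (2 * (M + 1))).
  assert (Heps : 0 < eps) by (unfold eps; apply Rinv_0_lt_compat; lra).
  assert (HepsM : eps * M <= /2).
  { unfold eps. apply Rmult_le_reg_l with (2 * (M + 1)). lra. rewrite <- Rmult_assoc, Rinv_r by lra. lra. }
  destruct (qA eps Heps) as [C [HC0 Hb]]. exists (M * C * Mc). split. apply Rmult_le_pos; nra.
  intros n x. unfold opmul. eapply Rle_trans. apply (pow_bound X B M HM HM0 (S n)).
  assert (hx := vnorm_nonneg x).
  eapply Rle_trans. apply Rmult_le_compat_l. apply pow_le; auto. apply Hb.
  eapply Rle_trans. apply Rmult_le_compat_l. apply pow_le; auto. apply Rmult_le_compat_l.
  apply Rmult_le_pos; [lra|apply pow_le; lra]. apply HMc.
  replace (M ^ S n * (C * eps ^ n * (Mc * vnorm x))) with (M * C * Mc * vnorm x * (eps * M) ^ n)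
    by (rewrite Rpow_mult_distr; simpl; ring).
  replace (M * C * Mc * (/ 2) ^ n * vnorm x) with (M * C * Mc * vnorm x * (/ 2) ^ n) by ring.
  apply Rmult_le_compat_l. apply Rmult_le_pos; [apply Rmult_le_pos|]; nra.
  apply pow_incr. split; [nra|lra].
Qed.

Lemma gd_addg P P' Y Y' : BL P -> BL Y -> BL Y' -> gd X P P' ->
  Y' ** (Y ** Y') = Y' -> Y ** Y' = Y' ** Y -> Y ** Y ** Y' = Y -> P ** Y = Zop X ->
  exists s, gd X (P +++ Y) s.
Proof.
  intros HP HY HY' [HP' [H1 [H2 Hg]]] G1 G2 G3 HPY.
  assert (R1 : forall z, P' (P (P' z)) = P' z) by apply (pw X _ _ H1).
  assert (R2 : forall z, P (P' z) = P' (P z)) by apply (pw X _ _ H2).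
  assert (Q1 : forall z, Y' (Y (Y' z)) = Y' z) by apply (pw X _ _ G1).
  assert (Q2 : forall z, Y (Y' z) = Y' (Y z)) by apply (pw X _ _ G2).
  assert (Q3 : forall z, Y (Y (Y' z)) = Y z) by apply (pw X _ _ G3).
  assert (R0 : forall z, P (Y z) = vzero) by (intro z; apply (pw X _ _ HPY z)).
  assert (D1 : forall z, P' (Y z) = vzero) by (intro z; rewrite <- R1, R2, R0; lin; reflexivity).
  assert (QQ : forall z, Y (Y' (Y' z)) = Y' z) by (intro z; rewrite Q2, Q1; reflexivity).
  assert (D2 : forall z, P (Y' z) = vzero) by (intro z; rewrite <- QQ, R0; reflexivity).
  assert (D3 : forall z, P' (Y' z) = vzero) by (intro z; rewrite <- QQ, D1; reflexivity).
  set (g := P --- P ** P ** P') in Hg.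
  set (p := Iop X --- P ** P').
  set (phi := Iop X --- Y ** Y').
  assert (Hgb : BL g) by (unfold g; bl). assert (Hpb : BL p) by (unfold p; bl).
  assert (Hphi : BL phi) by (unfold phi; bl).
  assert (gY' : forall z, g (Y' z) = vzero) by (intro z; unfold g, opsub, opmul; rewrite D2, D3; lin; vgroup).
  assert (gY : forall z, g (Y z) = vzero) by (intro z; unfold g, opsub, opmul; rewrite R0, D1; lin; vgroup).
  assert (gp : forall z, g (p z) = g z).
  { intro z. unfold g, p, opsub, opmul, Iop. lin. rewrite R1. vgroup. }
  assert (gphi : forall z, g (phi z) = g z).
  { intro z. unfold phi, opsub, opmul, Iop. lin. rewrite gY. vgroup. }
  assert (pP : forall z, p (P z) = g (p z)).
  { intro z. rewrite gp. unfold g, p, opsub, opmul, Iop. rewrite <- R2. reflexivity. }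
  set (Fam := fun (Cc : X -> X) n => oppow X Y' (S n) ** (oppow X g n ** Cc)).
  assert (HFam : forall Cc n, BL Cc -> BL (Fam Cc n)) by (intros; unfold Fam; bl).
  assert (Ex : forall Cc, BL Cc -> exists S, BL S /\ sums X (Fam Cc) S).
  { intros Cc HCc. destruct (gb_fam Y' g Cc Hgb HY' HCc Hg) as [K [HK Hgbk]].
    apply (sums_exists X (Fam Cc) K); auto. }
  destruct (Ex p Hpb) as [T [HT HTs]].
  destruct (Ex (g ** p) ltac:(bl)) as [W [HW HWs]].
  destruct (Ex (g ** (g ** p)) ltac:(bl)) as [V [HV HVs]].
  assert (YFam : forall Cc n, Y ** Fam Cc (S n) = Fam (g ** Cc) n).
  { intros Cc n. apply functional_extensionality; intro z.
    change (Y (Y' (Y' (oppow X Y' n (oppow X g (S n) (Cc z))))) = Y' (oppow X Y' n (oppow X g n (g (Cc z))))).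
    rewrite QQ, (oppow_succ_r X g n). reflexivity. }
  set (s := phi ** P' +++ T).
  assert (Hs : BL s) by (unfold s; bl).
  assert (ZT : forall Cc S (A : X -> X), BL A -> sums X (Fam Cc) S -> (forall z, A (Y' z) = vzero) -> A ** S = Zop X).
  { intros Cc S A HA HS HAz. apply (sums_allzero X (fun n => A ** Fam Cc n)). apply sums_mul_l; auto.
    intro n. apply functional_extensionality; intro z. unfold Fam. cbn [oppow]. unfold opmul, Zop. apply HAz. }
  assert (PT : P ** T = Zop X) by (apply (ZT p T P); auto).
  assert (P'T : P' ** T = Zop X) by (apply (ZT p T P'); auto).
  assert (YT : Y ** T = Y ** Y' ** p +++ W).
  { apply (sums_unique X (fun n => Y ** Fam p n)). apply sums_mul_l; auto.
    apply (sums_shift X (fun n => Y ** Fam p n)). apply (sums_ext X (Fam (g ** p))); auto.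
    all: try (intro n; rewrite YFam; reflexivity). }
  assert (TP : T ** P = W).
  { apply (sums_unique X (fun n => Fam p n ** P)). apply sums_mul_r; auto.
    apply (sums_ext X (Fam (g ** p))); auto. intro n. apply functional_extensionality; intro z.
    unfold Fam, opmul. rewrite pP. reflexivity. }
  assert (TY : T ** Y = Y' ** Y).
  { transitivity (Fam p 0%nat ** Y).
    - apply (sums_unique X (fun n => Fam p n ** Y)). apply sums_mul_r; auto.
      apply (sums_single X (fun n => Fam p n ** Y)).
      intro n. apply functional_extensionality; intro z.
      change (Y' (oppow X Y' (S n) (g (oppow X g n (p (Y z))))) = vzero).
      assert (E : p (Y z) = Y z) by (unfold p, opsub, opmul, Iop; rewrite D1; lin; vgroup).
      rewrite E. rewrite (pw X _ _ (oppow_commT X g n) (Y z) : g (oppow X g n (Y z)) = oppow X g n (g (Y z))).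
      rewrite gY. rewrite (bl_zero X (oppow X g n)) by bl. rewrite (bl_zero X (oppow X Y' (S n))) by bl. apply (bl_zero X); bl.
    - apply functional_extensionality; intro z.
      change (Y' (p (Y z)) = Y' (Y z)). unfold p, opsub, opmul, Iop. rewrite D1. lin. f_equal. vgroup. }
  assert (cs : (P +++ Y) ** s = P ** P' +++ Y ** Y' ** p +++ W).
  { apply functional_extensionality; intro z. unfold s, phi, opadd, opsub, opmul, Iop. lin.
    rewrite (pw X _ _ PT z : P (T z) = vzero), (pw X _ _ YT z : Y (T z) = vadd (Y (Y' (p z))) (W z)).
    rewrite Q3, R0. lin. vgroup. }
  assert (sc : s ** (P +++ Y) = (P +++ Y) ** s).
  { rewrite cs. apply functional_extensionality; intro z. unfold s, phi, p, opadd, opsub, opmul, Iop. lin.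
    rewrite (pw X _ _ TP z : T (P z) = W z), (pw X _ _ TY z : T (Y z) = Y' (Y z)), D1. lin.
    rewrite <- Q2. rewrite <- (R2 z). vgroup. }
  exists s. split; [|split; [|split]]; auto.
  - transitivity ((P ** P' +++ Y ** Y' ** p +++ W) ** s).
    { rewrite <- cs. change (s ** ((P +++ Y) ** s)) with ((s ** (P +++ Y)) ** s). rewrite sc. reflexivity. }
    assert (Wg : W ** s = Zop X).
    { assert (gs : forall z, g (p (s z)) = vzero).
      { intro z. rewrite gp. unfold g, s, phi, opadd, opsub, opmul, Iop. lin.
        rewrite (pw X _ _ PT z : P (T z) = vzero), (pw X _ _ P'T z : P' (T z) = vzero), R0, D1. lin.
        rewrite (R2 (P' z)), R1. vgroup. }
      apply (sums_allzero X (fun n => Fam (g ** p) n ** s)). apply sums_mul_r; auto.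
      intro n. apply functional_extensionality; intro z. unfold Fam, opmul, Zop. rewrite gs.
      rewrite (bl_zero X (oppow X g n)) by bl. apply (bl_zero X); bl. }
    assert (fT : forall z, Y (Y' (T z)) = T z).
    { intro z. assert (Hf : Y ** Y' ** T = T).
      { apply (sums_unique X (fun n => Y ** Y' ** Fam p n)). apply sums_mul_l; auto. bl.
        apply (sums_ext X (Fam p)); auto. intro n. apply functional_extensionality; intro u.
        unfold Fam. cbn [oppow]. unfold opmul. rewrite QQ. reflexivity. }
      apply (pw X _ _ Hf z). }
    apply functional_extensionality; intro z.
    change (vadd (vadd (P (P' (s z))) (Y (Y' (p (s z))))) (W (s z)) = s z).
    rewrite (pw X _ _ Wg z : W (s z) = vzero).
    unfold s, phi, p, opadd, opsub, opmul, Iop. lin.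
    rewrite (pw X _ _ P'T z : P' (T z) = vzero), D1, fT. lin.
    rewrite (R2 (P' z)), R1, Q1. vgroup.
  -
    assert (PW : P ** W = Zop X) by (apply (ZT (g ** p) W P); auto).
    assert (gV : g ** V = Zop X) by (apply (ZT (g ** (g ** p)) V g); auto).
    assert (YW : Y ** W = Y ** Y' ** (g ** p) +++ V).
    { apply (sums_unique X (fun n => Y ** Fam (g ** p) n)). apply sums_mul_l; auto.
      apply (sums_shift X (fun n => Y ** Fam (g ** p) n)). apply (sums_ext X (Fam (g ** (g ** p)))); auto.
      all: try (intro n; rewrite YFam; reflexivity). }
    assert (E1 : (P +++ Y) --- (P +++ Y) ** (P +++ Y) ** s = (phi ** g) --- V).
    { change ((P +++ Y) ** (P +++ Y) ** s) with ((P +++ Y) ** ((P +++ Y) ** s)). rewrite cs.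
      apply functional_extensionality; intro z. unfold opadd, opsub, opmul. lin.
      rewrite (pw X _ _ PW z : P (W z) = vzero), (pw X _ _ YW z : Y (W z) = vadd (Y (Y' (g (p z)))) (V z)).
      rewrite Q3, R0, gp. unfold phi, p, g, opsub, opmul, Iop. lin. vgroup. }
    rewrite E1.
    assert (Zk : forall k, oppow X (phi ** g) (S k) = phi ** (oppow X g k ** g)).
    { induction k. reflexivity.
      apply functional_extensionality; intro z.
      change (phi (g (oppow X (phi ** g) (S k) z)) = phi (g (oppow X g k (g z)))).
      rewrite IHk. unfold opmul. rewrite gphi. reflexivity. }
    assert (Vphi : V ** phi = V).
    { apply (sums_unique X (fun n => Fam (g ** (g ** p)) n ** phi)). apply sums_mul_r; auto.
      apply (sums_ext X (Fam (g ** (g ** p)))); auto. intro n. apply functional_extensionality; intro z.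
      unfold Fam, opmul. rewrite !gp, gphi. reflexivity. }
    apply qn_tail_l; auto. bl.
    + apply (qn_conj X _ phi g g); auto.
    + apply functional_extensionality; intro z. unfold opmul, Zop.
      rewrite (pw X _ _ gV z : g (V z) = vzero). lin. reflexivity.
    + apply (sums_allzero X (fun n => Fam (g ** (g ** p)) n ** V)). apply sums_mul_r; auto.
      intro n. apply functional_extensionality; intro z. unfold Fam, opmul, Zop.
      rewrite gp, (pw X _ _ gV z : g (V z) = vzero). lin.
      rewrite (bl_zero X (oppow X g n)) by bl. apply (bl_zero X); bl.
    + intros eps Heps. destruct (Hg eps Heps) as [C [HC Hb]].
      destruct (bl_bnd X V HV) as [Mv [HMv0 HMv]].
      exists ((Mv + 1) * C). split. nra. intros k z.
      assert (E : V (oppow X (phi ** g) k z) = V (oppow X g k z)).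
      { destruct k. reflexivity. rewrite Zk. unfold opmul.
        rewrite (pw X _ _ Vphi _ : V (phi _) = V _). rewrite (oppow_succ_r X g k). reflexivity. }
      rewrite E. eapply Rle_trans. apply HMv. eapply Rle_trans. apply Rmult_le_compat_l; [auto|apply Hb].
      assert (hz := vnorm_nonneg z). assert (hp : 0 < eps ^ k) by (apply pow_lt; lra).
      assert (0 <= C * eps ^ k * vnorm z) by (apply Rmult_le_pos; nra).
      replace ((Mv + 1) * C * eps ^ k * vnorm z) with ((Mv + 1) * (C * eps ^ k * vnorm z)) by ring.
      apply Rmult_le_compat_r; auto. lra.
Qed.
End DG.
Section DW.
Variable X : CBanach.
Notation BL := (BL X).
Notation qn := (qn X).
Notation "A ** B" := (opmul X A B) (at level 40, left associativity).
Notation "A +++ B" := (opadd X A B) (at level 50, left associativity).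
Notation "A --- B" := (opsub X A B) (at level 50, left associativity).

Lemma gd_dw P P' Q Q' : BL P -> BL Q -> gd X P P' -> gd X Q Q' -> P ** Q = Zop X ->
  exists s, gd X (P +++ Q) s.
Proof.
  intros HP HQ GP GQ HPQ.
  destruct GQ as [HQ' [K1 [K2 KN]]].
  assert (R1 : forall z, Q' (Q (Q' z)) = Q' z) by apply (pw X _ _ K1).
  assert (R2 : forall z, Q (Q' z) = Q' (Q z)) by apply (pw X _ _ K2).
  assert (R0 : forall z, P (Q z) = vzero) by (intro z; apply (pw X _ _ HPQ z)).
  set (N := Q --- Q ** Q ** Q') in KN.
  assert (HNb : BL N) by (unfold N; bl).
  destruct (gd_addq X P P' N HP HNb GP KN) as [s1 Hs1].
  { apply functional_extensionality; intro z. unfold N, opsub, opmul, Zop. lin. rewrite !R0. vgroup. }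
  assert (QQ : forall z, Q (Q' (Q' z)) = Q' z) by (intro z; rewrite R2, R1; reflexivity).
  destruct (gd_addg X (P +++ N) s1 (Q ** Q ** Q') Q') as [s Hs]; auto.
  - bl.
  - bl.
  - apply functional_extensionality; intro z. unfold opmul. rewrite QQ, R1. reflexivity.
  - apply functional_extensionality; intro z. unfold opmul. rewrite QQ, (R2 z), R1. reflexivity.
  - apply functional_extensionality; intro z. unfold opmul. rewrite QQ, R1. reflexivity.
  - apply functional_extensionality; intro z. unfold N, opadd, opsub, opmul, Zop. lin. rewrite !R0.
    rewrite (R2 z), R1. vgroup.
  - exists s. replace (P +++ Q) with (P +++ N +++ Q ** Q ** Q'); auto.
    apply functional_extensionality; intro z. unfold N, opadd, opsub, opmul. vgroup.
Qed.
End DW.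

Theorem theorem2p2 (X : CBanach) (a b : X -> X) :
  bounded_linear X a -> bounded_linear X b ->
  has_gDrazin X a -> has_gDrazin X b ->
  (forall x, a (b (a x)) = vzero) ->
  (forall x, b (a (b x)) = vzero) ->
  (forall x, a (a (b (b x))) = vzero) ->
  (forall x, a (b (b (b x))) = vzero) ->
  has_gDrazin X (opadd X a b).
Proof.
  intros Ha Hb Ga Gb Haba Hbab Haabb Habbb.
  change (BL X a) in Ha. change (BL X b) in Hb.
  apply has_gd in Ga; auto. apply has_gd in Gb; auto.
  destruct Ga as [sa Ga]. destruct Gb as [sb Gb].
  Ltac kill Haba Hbab Haabb Habbb := repeat (rewrite Haba || rewrite Hbab || rewrite Haabb || rewrite Habbb); lin.
  assert (Ga3 := gd_cube X a sa Ha Ga). assert (Gb3 := gd_cube X b sb Hb Gb).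
  set (y1 := opmul X b (opmul X b a)).
  assert (Hy1 : BL X y1) by (unfold y1; bl).
  assert (qy1 : qn X y1).
  { apply qn_sq0; auto. apply functional_extensionality; intro z. unfold y1, opmul, Zop.
    kill Haba Hbab Haabb Habbb. reflexivity. }
  destruct (gd_addq X (opmul X a (opmul X a a)) (opmul X sa (opmul X sa sa)) y1) as [w1 Gw1]; auto.
  bl. apply functional_extensionality; intro z. unfold y1, opmul, Zop. kill Haba Hbab Haabb Habbb. reflexivity.
  set (xx := opadd X (opadd X (opmul X a a) (opmul X a b)) (opmul X b b)).
  assert (Hxx : BL X xx) by (unfold xx; bl).
  assert (EW : opadd X (opmul X a (opmul X a a)) y1 = opmul X xx a).
  { apply functional_extensionality; intro z. unfold xx, y1, opadd, opmul. kill Haba Hbab Haabb Habbb. vgroup. }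
  rewrite EW in Gw1.
  assert (GX1 := gd_cline X xx a w1 Hxx Ha Gw1).
  set (Y1 := opadd X (opmul X b (opmul X a a)) (opmul X b (opmul X b a))).
  assert (HY1 : BL X Y1) by (unfold Y1; bl).
  assert (qY1 : qn X Y1).
  { apply qn_sq0; auto. apply functional_extensionality; intro z. unfold Y1, opadd, opmul, Zop. lin.
    kill Haba Hbab Haabb Habbb. vgroup. }
  destruct (gd_addq X (opmul X a xx) _ Y1 ltac:(bl) HY1 GX1 qY1) as [w2 Gw2].
  { apply functional_extensionality; intro z. unfold xx, Y1, opadd, opmul, Zop. lin.
    kill Haba Hbab Haabb Habbb. vgroup. }
  destruct (gd_dw X (opadd X (opmul X a xx) Y1) w2 (opmul X b (opmul X b b)) _ ltac:(bl) ltac:(bl) Gw2 Gb3) as [w3 Gw3].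
  { apply functional_extensionality; intro z. unfold xx, Y1, opadd, opmul, Zop. lin.
    kill Haba Hbab Haabb Habbb. vgroup. }
  set (c := opadd X a b).
  assert (Hc : BL X c) by (unfold c; bl).
  assert (Ec : opadd X (opadd X (opmul X a xx) Y1) (opmul X b (opmul X b b)) = opmul X c (opmul X c c)).
  { apply functional_extensionality; intro z. unfold c, xx, Y1, opadd, opmul. lin.
    kill Haba Hbab Haabb Habbb. vgroup. }
  rewrite Ec in Gw3.
  assert (Hcw := gd_comm X (opmul X c (opmul X c c)) w3 c ltac:(bl) Hc Gw3 eq_refl).
  apply gd_has; auto. exists (opmul X (opmul X c c) w3). apply gd_cuberoot; auto.
Qed.
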